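(* Let $b_1,b_2,b_3\in\mathbb{Z}$ satisfy $b_2>b_3>0>b_1$ and $b_1+b_2+b_3=0$. Define $a_1,a_2,a_3$ by \[ a_1={\textstyle\frac{1}{\sqrt{3}}}(b_3-b_2),\quad a_2={\textstyle\frac{1}{\sqrt{3}}}(b_1-b_3),\quad a_3={\textstyle\frac{1}{\sqrt{3}}}(b_2-b_1), \] and define $a>0$ and $b\in(0,1)$ by \[ a^2=a_2(a_1-a_3) \quad\text{and}\quad b^2={a_1(a_2-a_3)\over a_2(a_1-a_3)}. \] Define a subset $N$ of $\mathbb{C}^3$ by \begin{align*} N=\Bigl\{ \bigl(&r{\rm e}^{ib_1s} \bigl({\textstyle{a_3-a_1\over a_3}}\bigr)^{1/2}\operatorname{dn}(at,b),\; r{\rm e}^{ib_2s} \bigl({\textstyle{a_3-a_2\over a_3}}\bigr)^{1/2}\operatorname{cn}(at,b),\\ &r{\rm e}^{ib_3s} \bigl({\textstyle{a_2-a_3\over a_2}}\bigr)^{1/2}\operatorname{sn}(at,b) \bigr):r>0,\quad s,t\in\mathbb{R}\Bigr\}. \end{align*} Then $N$ is a special Lagrangian cone on $T^2$ in $\mathbb{C}^3$ with phase $i$. Furthermore, $(s,t)$ are conformal coordinates on $N\cap\mathcal{S}^5$.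
   Context: $\mathbb{C}^3$ carries the Euclidean metric $g$, Kähler form $\omega=\frac{i}{2}\sum_j dz_j\wedge d\bar z_j$ and holomorphic volume form $\Omega=dz_1\wedge dz_2\wedge dz_3$; an oriented real 3-dimensional submanifold is special Lagrangian with phase ${\rm e}^{i\theta}$ if it is calibrated by $\cos\theta\,\mathrm{Re}\,\Omega+\sin\theta\,\mathrm{Im}\,\Omega$. $\mathcal{S}^5$ denotes the unit sphere in $\mathbb{C}^3$. $\operatorname{sn}(t,k),\operatorname{cn}(t,k),\operatorname{dn}(t,k)$ are the Jacobi elliptic functions with modulus $k$, which for $k\in[0,1)$ are periodic in $t$. *)

(* Defs.v *)
From Stdlib Require Import Reals ZArith ClassicalEpsilon.
From Coquelicot Require Import Coquelicot.
Open Scope R_scope.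

Definition ellF (k phi : R) : R :=
  RInt (fun th => / sqrt (1 - k ^ 2 * sin th ^ 2)) 0 phi.
Definition jam (u k : R) : R :=
  epsilon (inhabits 0) (fun phi => ellF k phi = u).
Definition jsn (u k : R) : R := sin (jam u k).
Definition jcn (u k : R) : R := cos (jam u k).
Definition jdn (u k : R) : R := sqrt (1 - k ^ 2 * jsn u k ^ 2).

Definition C3 : Type := (C * C * C)%type.

Definition c3scal (l : R) (p : C3) : C3 :=
  let '(z1, z2, z3) := p in (RtoC l * z1, RtoC l * z2, RtoC l * z3)%C.
Definition c3add (p q : C3) : C3 :=
  let '(z1, z2, z3) := p in let '(w1, w2, w3) := q in
  (z1 + w1, z2 + w2, z3 + w3)%C.
Definition c3zero : C3 := (RtoC 0, RtoC 0, RtoC 0).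

Definition g3 (p q : C3) : R :=
  let '(z1, z2, z3) := p in let '(w1, w2, w3) := q in
  Re (Cconj z1 * w1) + Re (Cconj z2 * w2) + Re (Cconj z3 * w3).
Definition norm3 (p : C3) : R := sqrt (g3 p p).
Definition S5 (p : C3) : Prop := norm3 p = 1.

(* holomorphic volume form Omega = dz1 ^ dz2 ^ dz3 evaluated on (u,v,w):
   the complex determinant of the matrix with columns u, v, w *)
Definition Omega3 (u v w : C3) : C :=
  let '(u1, u2, u3) := u in let '(v1, v2, v3) := v in let '(w1, w2, w3) := w in
  (u1 * (v2 * w3 - v3 * w2) - v1 * (u2 * w3 - u3 * w2)
   + w1 * (u2 * v3 - u3 * v2))%C.

(* 3x3 real determinant and Gram determinant; sqrt (gram3 u v w) is the
   Riemannian volume of the parallelepiped spanned by u, v, w *)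
Definition det3 (a11 a12 a13 a21 a22 a23 a31 a32 a33 : R) : R :=
  a11 * (a22 * a33 - a23 * a32) - a12 * (a21 * a33 - a23 * a31)
  + a13 * (a21 * a32 - a22 * a31).
Definition gram3 (u v w : C3) : R :=
  det3 (g3 u u) (g3 u v) (g3 u w) (g3 v u) (g3 v v) (g3 v w)
       (g3 w u) (g3 w v) (g3 w w).

Definition expi (x : R) : C := (cos x, sin x).

Definition a1 (b1 b2 b3 : Z) : R := / sqrt 3 * (IZR b3 - IZR b2).
Definition a2 (b1 b2 b3 : Z) : R := / sqrt 3 * (IZR b1 - IZR b3).
Definition a3 (b1 b2 b3 : Z) : R := / sqrt 3 * (IZR b2 - IZR b1).
Definition aa (b1 b2 b3 : Z) : R :=
  sqrt (a2 b1 b2 b3 * (a1 b1 b2 b3 - a3 b1 b2 b3)).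
Definition bb (b1 b2 b3 : Z) : R :=
  sqrt (a1 b1 b2 b3 * (a2 b1 b2 b3 - a3 b1 b2 b3)
        / (a2 b1 b2 b3 * (a1 b1 b2 b3 - a3 b1 b2 b3))).

Definition PhiN (b1 b2 b3 : Z) (r s t : R) : C3 :=
  let A1 := a1 b1 b2 b3 in let A2 := a2 b1 b2 b3 in let A3 := a3 b1 b2 b3 in
  let a := aa b1 b2 b3 in let b := bb b1 b2 b3 in
  (RtoC (r * sqrt ((A3 - A1) / A3) * jdn (a * t) b) * expi (IZR b1 * s),
   RtoC (r * sqrt ((A3 - A2) / A3) * jcn (a * t) b) * expi (IZR b2 * s),
   RtoC (r * sqrt ((A2 - A3) / A2) * jsn (a * t) b) * expi (IZR b3 * s))%C.

Definition Nset (b1 b2 b3 : Z) (p : C3) : Prop :=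
  exists r s t, 0 < r /\ p = PhiN b1 b2 b3 r s t.

(** * Geometric notions, for a set N given with a parametrization
      Phi : (0,oo) x R x R -> C^3, N = { Phi r s t | r > 0 } *)

Definition C1_immersion (Phi : R -> R -> R -> C3) : Prop :=
  exists Xr Xs Xt : R -> R -> R -> C3,
    forall r s t, 0 < r ->
      is_derive (fun x => Phi x s t) r (Xr r s t) /\
      is_derive (fun x => Phi r x t) s (Xs r s t) /\
      is_derive (fun x => Phi r s x) t (Xt r s t) /\
      continuous (fun p : R * R * R => Xr (fst (fst p)) (snd (fst p)) (snd p)) (r, s, t) /\
      continuous (fun p : R * R * R => Xs (fst (fst p)) (snd (fst p)) (snd p)) (r, s, t) /\
      continuous (fun p : R * R * R => Xt (fst (fst p)) (snd (fst p)) (snd p)) (r, s, t) /\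
      (forall al be ga : R,
         c3add (c3add (c3scal al (Xr r s t)) (c3scal be (Xs r s t)))
               (c3scal ga (Xt r s t)) = c3zero ->
         al = 0 /\ be = 0 /\ ga = 0).

Definition is_cone (N : C3 -> Prop) : Prop :=
  forall p l, N p -> 0 < l -> N (c3scal l p).

(* the image is a cone on T^2: Phi is injective modulo a rank-2 lattice of
   the (s,t)-plane (which is left invariant), so that the link is the
   embedded image of the torus R^2 / Lambda *)
Definition cone_on_T2_param (Phi : R -> R -> R -> C3) : Prop :=
  exists u1 u2 v1 v2 : R, u1 * v2 - u2 * v1 <> 0 /\
    forall r s t r' s' t', 0 < r -> 0 < r' ->
      (Phi r s t = Phi r' s' t' <->
       r = r' /\ exists m n : Z,
         s' - s = IZR m * u1 + IZR n * v1 /\ t' - t = IZR m * u2 + IZR n * v2).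

(* special Lagrangian with phase e^{i theta}: calibrated by
   cos theta Re Omega + sin theta Im Omega, for one of the two orientations
   of the (connected) parametrized 3-fold *)
Definition calibrated_SL (theta : R) (Phi : R -> R -> R -> C3) : Prop :=
  exists eps : R, (eps = 1 \/ eps = -1) /\
  forall r s t Xr Xs Xt, 0 < r ->
    is_derive (fun x => Phi x s t) r Xr ->
    is_derive (fun x => Phi r x t) s Xs ->
    is_derive (fun x => Phi r s x) t Xt ->
    eps * (cos theta * Re (Omega3 Xr Xs Xt) + sin theta * Im (Omega3 Xr Xs Xt))
      = sqrt (gram3 Xr Xs Xt).

(* (s,t) are conformal coordinates on N cap S^5: the chart
   (s,t) |-> Phi 1 s t / |Phi 1 s t| of N cap S^5 (radial projection) *)
Definition link_chart (Phi : R -> R -> R -> C3) (s t : R) : C3 :=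
  c3scal (/ norm3 (Phi 1 s t)) (Phi 1 s t).

Definition conformal_coords (psi : R -> R -> C3) : Prop :=
  forall s t, exists Ys Yt,
    is_derive (fun x => psi x t) s Ys /\
    is_derive (fun x => psi s x) t Yt /\
    g3 Ys Yt = 0 /\ g3 Ys Ys = g3 Yt Yt /\ 0 < g3 Ys Ys.

(* Main.v *)
Require Import Defs.
From Stdlib Require Import Reals ZArith ClassicalEpsilon Lra Lia Psatz.
From Coquelicot Require Import Coquelicot.
Open Scope R_scope.

Definition ef (k th : R) : R := / sqrt (1 - k ^ 2 * sin th ^ 2).

Lemma sin_sq_le1 x : 0 <= sin x ^ 2 <= 1.
Proof. pose proof (sin2_cos2 x) as H. unfold Rsqr in H. split; nra. Qed.

Lemma ef_arg_pos k th : k^2 < 1 -> 0 < 1 - k^2 * sin th ^2.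
Proof. intros Hk. pose proof (sin_sq_le1 th). pose proof (pow2_ge_0 k). nra. Qed.

Lemma ef_ge1 k th : k^2 < 1 -> 1 <= ef k th.
Proof.
  intros Hk. unfold ef. pose proof (ef_arg_pos k th Hk).
  pose proof (sin_sq_le1 th). pose proof (pow2_ge_0 k).
  assert (Hs : sqrt (1 - k ^ 2 * sin th ^ 2) <= 1).
  { rewrite <- sqrt_1 at 2. apply sqrt_le_1_alt. nra. }
  assert (0 < sqrt (1 - k ^ 2 * sin th ^ 2)) by (apply sqrt_lt_R0; lra).
  rewrite <- Rinv_1 at 1. apply Rinv_le_contravar; lra.
Qed.

Lemma ef_cont k th : k^2 < 1 -> continuous (ef k) th.
Proof.
  intros Hk. apply (@ex_derive_continuous R_AbsRing R_NormedModule (ef k) th). unfold ef.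
  pose proof (ef_arg_pos k th Hk).
  auto_derive. split. lra. split; [|easy].
  apply Rgt_not_eq. apply sqrt_lt_R0. lra.
Qed.

Lemma ef_exRInt k a b : k^2 < 1 -> ex_RInt (ef k) a b.
Proof. intros Hk. apply (@ex_RInt_continuous R_CompleteNormedModule). intros; apply ef_cont; auto. Qed.

Lemma ef_shift k th : ef k (th + PI) = ef k th.
Proof. unfold ef. rewrite neg_sin. f_equal. f_equal. ring. Qed.

Lemma ef_even k th : ef k (- th) = ef k th.
Proof. unfold ef. rewrite sin_neg. f_equal. f_equal. ring. Qed.

Lemma ellF_eq k phi : ellF k phi = RInt (ef k) 0 phi.
Proof. reflexivity. Qed.

Lemma ellF_deriv k x : k^2 < 1 -> is_derive (ellF k) x (ef k x).
Proof.
  intros Hk. apply (is_derive_RInt (ef k) (ellF k) 0 x).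
  - apply filter_forall. intros b. rewrite ellF_eq. apply (@RInt_correct R_CompleteNormedModule). apply ef_exRInt; auto.
  - apply ef_cont; auto.
Qed.

Lemma ellF_0 k : ellF k 0 = 0.
Proof. rewrite ellF_eq. apply (@RInt_point R_CompleteNormedModule). Qed.

Lemma ellF_diff k x y : k^2 < 1 -> ellF k y - ellF k x = RInt (ef k) x y.
Proof.
  intros Hk. rewrite !ellF_eq.
  rewrite <- (RInt_Chasles (ef k) 0 x y); try apply ef_exRInt; auto.
  unfold plus; simpl. ring.
Qed.

Lemma ellF_mono k x y : k^2 < 1 -> x <= y -> y - x <= ellF k y - ellF k x.
Proof.
  intros Hk Hxy. rewrite ellF_diff; auto.
  replace (y - x) with (RInt (fun _ => 1) x y).
  - apply RInt_le; auto. apply ex_RInt_const. apply ef_exRInt; auto.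
    intros; apply ef_ge1; auto.
  - rewrite RInt_const. unfold scal; simpl. unfold mult; simpl. ring.
Qed.

Lemma ellF_shift k phi : k^2 < 1 -> ellF k (phi + PI) = ellF k phi + ellF k PI.
Proof.
  intros Hk.
  assert (H1 : ellF k (phi + PI) - ellF k PI = RInt (ef k) PI (phi + PI)) by (apply ellF_diff; auto).
  assert (H2 : RInt (ef k) PI (phi + PI) = RInt (ef k) 0 phi).
  { pose proof (RInt_comp_lin (ef k) 1 PI 0 phi) as H.
    replace (1 * 0 + PI) with PI in H by ring.
    replace (1 * phi + PI) with (phi + PI) in H by ring.
    rewrite <- H. 2: apply ef_exRInt; auto.
    apply RInt_ext. intros x _. unfold scal; simpl; unfold mult; simpl.
    replace (1 * x + PI) with (x + PI) by ring. rewrite ef_shift. ring. }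
  rewrite (ellF_eq k phi). lra.
Qed.

Lemma ellF_odd k phi : k^2 < 1 -> ellF k (- phi) = - ellF k phi.
Proof.
  intros Hk. rewrite !ellF_eq.
  pose proof (RInt_comp_lin (ef k) (-1) 0 0 phi) as H.
  replace (-1 * 0 + 0) with 0 in H by ring.
  replace (-1 * phi + 0) with (- phi) in H by ring.
  rewrite <- H. 2: apply ef_exRInt; auto.
  transitivity (RInt (fun x => opp (ef k x)) 0 phi).
  - apply RInt_ext. intros x _. unfold scal, opp; simpl; unfold mult; simpl.
    replace (-1 * x + 0) with (- x) by ring. rewrite ef_even. ring.
  - rewrite (@RInt_opp R_CompleteNormedModule). reflexivity. apply ef_exRInt; auto.
Qed.

Lemma ellF_continuity k : k^2 < 1 -> continuity (ellF k).
Proof.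
  intros Hk x. apply continuity_pt_filterlim. apply (@ex_derive_continuous R_AbsRing R_NormedModule (ellF k) x).
  eexists. apply ellF_deriv; auto.
Qed.

Lemma ellF_surj k u : k^2 < 1 -> exists phi, ellF k phi = u.
Proof.
  intros Hk.
  assert (A : Rabs u - 0 <= ellF k (Rabs u) - ellF k 0) by (apply ellF_mono; auto; apply Rabs_pos).
  assert (B : 0 - - Rabs u <= ellF k 0 - ellF k (- Rabs u)).
  { apply ellF_mono; auto. pose proof (Rabs_pos u); lra. }
  rewrite ellF_0 in A, B.
  assert (C : - Rabs u <= u <= Rabs u) by (split; [pose proof (Rabs_maj2 u)| pose proof (Rle_abs u)]; lra).
  destruct (IVT_gen (ellF k) (- Rabs u) (Rabs u) u (ellF_continuity k Hk)) as [x [_ Hx]].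
  - split. apply Rle_trans with (ellF k (- Rabs u)). apply Rmin_l. lra.
    apply Rle_trans with (ellF k (Rabs u)). lra. apply Rmax_r.
  - exists x; exact Hx.
Qed.

Lemma jam_spec k u : k^2 < 1 -> ellF k (jam u k) = u.
Proof. intros Hk. unfold jam. apply epsilon_spec. apply ellF_surj; auto. Qed.

Lemma ellF_inj k x y : k^2 < 1 -> ellF k x = ellF k y -> x = y.
Proof.
  intros Hk H. destruct (Rle_dec x y).
  - pose proof (ellF_mono k x y Hk r). lra.
  - pose proof (ellF_mono k y x Hk ltac:(lra)). lra.
Qed.

Lemma jam_ellF k phi : k^2 < 1 -> jam (ellF k phi) k = phi.
Proof. intros Hk. apply (ellF_inj k); auto. apply jam_spec; auto. Qed.

Lemma inv_close q E eps : 1 <= q -> 1 <= E -> Rabs (q - E) < eps -> Rabs (/ q - / E) < eps.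
Proof.
  intros Hq HE H.
  assert (/ q - / E = (E - q) * (/ q * / E)) by (field; lra).
  rewrite H0, Rabs_mult.
  assert (0 < / q <= 1). { split. apply Rinv_0_lt_compat; lra. rewrite <- Rinv_1. apply Rinv_le_contravar; lra. }
  assert (0 < / E <= 1). { split. apply Rinv_0_lt_compat; lra. rewrite <- Rinv_1. apply Rinv_le_contravar; lra. }
  rewrite (Rabs_right (/ q * / E)) by nra.
  rewrite <- Rabs_Ropp in H. replace (- (q - E)) with (E - q) in H by ring.
  pose proof (Rabs_pos (E - q)). apply Rle_lt_trans with (Rabs (E - q) * 1); [apply Rmult_le_compat_l; nra | lra].
Qed.

Lemma jam_deriv k u : k^2 < 1 -> is_derive (fun v => jam v k) u (jdn u k).
Proof.
  intros Hk. apply is_derive_Reals.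
  set (phi := jam u k).
  pose proof (ellF_deriv k phi Hk) as HD. apply is_derive_Reals in HD.
  assert (HE : jdn u k = / ef k phi).
  { unfold jdn, jsn, ef. fold phi. rewrite Rinv_inv. reflexivity. }
  rewrite HE.
  intros eps Heps. destruct (HD eps Heps) as [delta Hdel].
  exists delta. intros h Hh0 Hh.
  set (d := jam (u + h) k - phi).
  assert (Fd : ellF k (phi + d) = u + h).
  { unfold d. replace (phi + (jam (u + h) k - phi)) with (jam (u+h) k) by ring. apply jam_spec; auto. }
  assert (Fp : ellF k phi = u) by (apply jam_spec; auto).
  assert (Hd0 : d <> 0).
  { intros E. rewrite E, Rplus_0_r in Fd. lra. }
  assert (Hdh : Rabs d <= Rabs h).
  { destruct (Rle_dec 0 d).
    - pose proof (ellF_mono k phi (phi + d) Hk ltac:(lra)).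
      rewrite Rabs_right by lra. rewrite Rabs_right; lra.
    - pose proof (ellF_mono k (phi + d) phi Hk ltac:(lra)).
      rewrite Rabs_left by lra. rewrite Rabs_left; lra. }
  specialize (Hdel d Hd0 ltac:(lra)).
  rewrite Fd, Fp in Hdel. replace (u + h - u) with h in Hdel by ring.
  assert (Hq : 1 <= h / d).
  { destruct (Rle_dec 0 d).
    - pose proof (ellF_mono k phi (phi + d) Hk ltac:(lra)). rewrite Fd, Fp in H.
      apply (Rmult_le_reg_r d). lra. unfold Rdiv. rewrite Rmult_assoc, Rinv_l; lra.
    - pose proof (ellF_mono k (phi + d) phi Hk ltac:(lra)). rewrite Fd, Fp in H.
      apply (Rmult_le_reg_r (- d)). lra. unfold Rdiv.
      replace (h * / d * - d) with (- h * (d * / d)) by ring. rewrite Rinv_r; lra. }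
  pose proof (inv_close (h / d) (ef k phi) eps Hq (ef_ge1 k phi Hk) Hdel) as R.
  replace ((jam (u + h) k - jam u k) / h) with (/ (h / d)). exact R.
  fold phi. fold d. field. split; auto.
Qed.

Definition sgn (n : Z) : R := if Z.even n then 1 else -1.

Lemma sgn_add n m : sgn (n + m) = sgn n * sgn m.
Proof. unfold sgn. rewrite Z.even_add. destruct (Z.even n), (Z.even m); simpl; ring. Qed.
Lemma sgn_opp n : sgn (- n) = sgn n.
Proof. unfold sgn. rewrite Z.even_opp. reflexivity. Qed.
Lemma sgn_1 : sgn 1 = -1.
Proof. reflexivity. Qed.
Lemma sgn_sq n : sgn n * sgn n = 1.
Proof. unfold sgn. destruct (Z.even n); ring. Qed.
Lemma sgn_cases n : sgn n = 1 \/ sgn n = -1.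
Proof. unfold sgn. destruct (Z.even n); auto. Qed.

Lemma Z_nat_ind (P : Z -> Prop) :
  (forall m : nat, P (Z.of_nat m)) -> (forall m : nat, P (- Z.of_nat m)%Z) -> forall n, P n.
Proof.
  intros H1 H2 n. destruct (Z.le_ge_cases 0 n).
  - rewrite <- (Z2Nat.id n) by lia. apply H1.
  - replace n with (- Z.of_nat (Z.to_nat (- n)))%Z. apply H2. rewrite Z2Nat.id; lia.
Qed.

Lemma cos_sin_kPI_nat (m : nat) : cos (INR m * PI) = sgn (Z.of_nat m) /\ sin (INR m * PI) = 0.
Proof.
  induction m as [|m IH].
  - simpl. rewrite Rmult_0_l, cos_0, sin_0. split; reflexivity.
  - rewrite S_INR. replace ((INR m + 1) * PI) with (INR m * PI + PI) by ring.
    rewrite neg_cos, neg_sin. rewrite Nat2Z.inj_succ, <- Z.add_1_r, sgn_add, sgn_1.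
    destruct IH as [IH1 IH2]. rewrite IH1, IH2. split; ring.
Qed.

Lemma cos_sin_kPI (n : Z) : cos (IZR n * PI) = sgn n /\ sin (IZR n * PI) = 0.
Proof.
  revert n. apply Z_nat_ind; intros m; destruct (cos_sin_kPI_nat m) as [A B].
  - rewrite <- INR_IZR_INZ. auto.
  - rewrite opp_IZR, <- INR_IZR_INZ, sgn_opp.
    replace (- INR m * PI) with (- (INR m * PI)) by ring. rewrite cos_neg, sin_neg, A, B. split; [reflexivity|ring].
Qed.

Lemma cos_shift_k x n : cos (x + IZR n * PI) = sgn n * cos x.
Proof. rewrite cos_plus. destruct (cos_sin_kPI n) as [A B]. rewrite A, B. ring. Qed.
Lemma sin_shift_k x n : sin (x + IZR n * PI) = sgn n * sin x.
Proof. rewrite sin_plus. destruct (cos_sin_kPI n) as [A B]. rewrite A, B. ring. Qed.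

Lemma ellF_shift_k k phi n : k^2 < 1 -> ellF k (phi + IZR n * PI) = ellF k phi + IZR n * ellF k PI.
Proof.
  intros Hk.
  assert (Hn : forall (m : nat) phi, ellF k (phi + INR m * PI) = ellF k phi + INR m * ellF k PI).
  { induction m as [|m IH]; intros p.
    - simpl. rewrite !Rmult_0_l, !Rplus_0_r. reflexivity.
    - rewrite S_INR. replace (p + (INR m + 1) * PI) with ((p + INR m * PI) + PI) by ring.
      rewrite ellF_shift, IH; auto. ring. }
  revert phi. revert n.
  apply (Z_nat_ind (fun n => forall phi, ellF k (phi + IZR n * PI) = ellF k phi + IZR n * ellF k PI)); intros m phi; simpl.
  - rewrite <- INR_IZR_INZ. apply Hn.
  - rewrite opp_IZR, <- INR_IZR_INZ.
    pose proof (Hn m (phi + - INR m * PI)) as H.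
    replace (phi + - INR m * PI + INR m * PI) with phi in H by ring. lra.
Qed.

Lemma jam_shift_k k u n : k^2 < 1 -> jam (u + IZR n * ellF k PI) k = jam u k + IZR n * PI.
Proof.
  intros Hk. apply (ellF_inj k); auto. rewrite jam_spec, ellF_shift_k, jam_spec; auto.
Qed.

Lemma jdn_pos k u : k^2 < 1 -> 0 < jdn u k.
Proof. intros Hk. unfold jdn, jsn. apply sqrt_lt_R0. apply ef_arg_pos; auto. Qed.

Lemma jdn_sq k u : k^2 < 1 -> jdn u k ^ 2 = 1 - k^2 * jsn u k ^ 2.
Proof. intros Hk. unfold jdn. rewrite pow2_sqrt. reflexivity. unfold jsn. pose proof (ef_arg_pos k (jam u k) Hk). lra. Qed.

Lemma jsn_jcn k u : jsn u k ^ 2 + jcn u k ^ 2 = 1.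
Proof. unfold jsn, jcn. pose proof (sin2_cos2 (jam u k)). unfold Rsqr in H. lra. Qed.

Lemma is_derive_eq (f : R -> R) x l l' : is_derive f x l -> l = l' -> is_derive f x l'.
Proof. intros H E; subst; exact H. Qed.

Lemma jsn_deriv k u : k^2 < 1 -> is_derive (fun v => jsn v k) u (jcn u k * jdn u k).
Proof.
  intros Hk. unfold jsn.
  apply is_derive_eq with (scal (jdn u k) (cos (jam u k))).
  apply (is_derive_comp sin (fun v => jam v k) u (cos (jam u k)) (jdn u k)).
  apply is_derive_Reals, derivable_pt_lim_sin. apply jam_deriv; auto.
  unfold scal; simpl; unfold mult; simpl; unfold jcn; ring.
Qed.

Lemma jcn_deriv k u : k^2 < 1 -> is_derive (fun v => jcn v k) u (- (jsn u k * jdn u k)).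
Proof.
  intros Hk. unfold jcn.
  apply is_derive_eq with (scal (jdn u k) (- sin (jam u k))).
  apply (is_derive_comp cos (fun v => jam v k) u (- sin (jam u k)) (jdn u k)).
  apply is_derive_Reals, derivable_pt_lim_cos. apply jam_deriv; auto.
  unfold scal; simpl; unfold mult; simpl; unfold jsn; ring.
Qed.

Lemma jdn_deriv k u : k^2 < 1 -> is_derive (fun v => jdn v k) u (- (k^2 * jsn u k * jcn u k)).
Proof.
  intros Hk. unfold jdn at 1.
  pose proof (jdn_pos k u Hk) as Hp.
  apply is_derive_eq with (scal (- k^2 * (2 * jsn u k * (jcn u k * jdn u k))) (/ (2 * sqrt (1 - k^2 * jsn u k ^ 2)))).
  apply (is_derive_comp sqrt (fun v => 1 - k^2 * jsn v k ^ 2) u).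
  - apply is_derive_Reals, derivable_pt_lim_sqrt. unfold jsn. apply ef_arg_pos; auto.
  - apply is_derive_eq with (0 - k^2 * (INR 2 * jsn u k ^ 1 * (jcn u k * jdn u k))).
    apply (@is_derive_minus R_AbsRing R_NormedModule (fun _ => 1) (fun v => k^2 * jsn v k ^2)).
    apply (@is_derive_const R_AbsRing R_NormedModule).
    apply is_derive_scal. apply is_derive_eq with (INR 2 * (jcn u k * jdn u k) * jsn u k ^ Init.Nat.pred 2).
    apply (is_derive_pow (fun v => jsn v k) 2). apply jsn_deriv; auto. simpl; ring.
    simpl. ring.
  - change (sqrt (1 - k^2 * jsn u k ^ 2)) with (jdn u k). unfold scal; simpl; unfold mult; simpl. field. lra.
Qed.

Lemma is_derive_pair' {U V : NormedModule R_AbsRing} (f : R -> U) (g : R -> V) x lf lg :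
  is_derive f x lf -> is_derive g x lg -> is_derive (fun y => (f y, g y)) x (lf, lg).
Proof.
  intros Hf Hg. unfold is_derive in *.
  apply (filterdiff_comp'_2 f g (fun u v => (u, v)) x _ _ (fun u v => (u, v)) Hf Hg).
  apply (filterdiff_ext_lin _ (fun t : prod_NormedModule R_AbsRing U V => t)).
  apply (filterdiff_ext (fun t : prod_NormedModule R_AbsRing U V => t)).
  intros [a b]; reflexivity. apply filterdiff_id. intros [a b]; reflexivity.
Qed.

Lemma locally_pair {U V : UniformSpace} (a : U) (b : V) (P : U * V -> Prop) :
  locally (a, b) P -> filter_prod (locally a) (locally b) P.
Proof.
  intros [eps H]. exists (ball a eps) (ball b eps).
  apply locally_ball. apply locally_ball.
  intros x y Hx Hy. apply H. split; assumption.
Qed.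

Lemma continuous_pair' {T U V : UniformSpace} (f : T -> U) (g : T -> V) x :
  continuous f x -> continuous g x -> continuous (fun y => (f y, g y)) x.
Proof.
  intros Hf Hg. unfold continuous.
  intros P HP. apply locally_pair in HP.
  apply (filterlim_pair f g Hf Hg). exact HP.
Qed.

Lemma cont_Rmult {U : UniformSpace} (f g : U -> R) x :
  continuous f x -> continuous g x -> continuous (fun y => f y * g y) x.
Proof. intros; apply (@continuous_mult U R_AbsRing); auto. Qed.

Lemma cont_fst3 (p : R * R * R) : continuous (fun p : R * R * R => fst (fst p)) p.
Proof.
  destruct p as [[r s] t].
  apply (continuous_comp (fun p : R*R*R => fst p) fst).
  apply continuous_fst. apply continuous_fst.
Qed.
Lemma cont_snd3 (p : R * R * R) : continuous (fun p : R * R * R => snd (fst p)) p.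
Proof.
  destruct p as [[r s] t].
  apply (continuous_comp (fun p : R*R*R => fst p) snd).
  apply continuous_fst. apply continuous_snd.
Qed.
Lemma cont_thd3 (p : R * R * R) : continuous (fun p : R * R * R => snd p) p.
Proof. destruct p as [[r s] t]. apply continuous_snd. Qed.

Lemma cont_prod3 (al be ga : R -> R) (p0 : R * R * R) :
  (forall x, continuous al x) -> (forall x, continuous be x) -> (forall x, continuous ga x) ->
  continuous (fun p : R * R * R => al (fst (fst p)) * be (snd (fst p)) * ga (snd p)) p0.
Proof.
  intros Ha Hb Hc. apply cont_Rmult. apply cont_Rmult.
  - apply (continuous_comp (fun p : R*R*R => fst (fst p)) al). apply cont_fst3. apply Ha.
  - apply (continuous_comp (fun p : R*R*R => snd (fst p)) be). apply cont_snd3. apply Hb.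
  - apply (continuous_comp (fun p : R*R*R => snd p) ga). apply cont_thd3. apply Hc.
Qed.

Notation CRNM := (prod_NormedModule R_AbsRing R_NormedModule R_NormedModule).
Notation C3NM := (prod_NormedModule R_AbsRing (prod_NormedModule R_AbsRing CRNM CRNM) CRNM).

Definition cpol (A th : R) : C := (A * cos th, A * sin th).
Definition cpolI (A th : R) : C := (- (A * sin th), A * cos th).

Lemma RtoC_expi A th : (RtoC A * expi th)%C = cpol A th.
Proof. unfold RtoC, expi, cpol, Cmult; simpl. f_equal; ring. Qed.

Lemma RtoC_cpol l A th : (RtoC l * cpol A th)%C = cpol (l * A) th.
Proof. unfold RtoC, cpol, Cmult; simpl. f_equal; ring. Qed.

Lemma g_cpol A B th : Re (Cconj (cpol A th) * cpol B th) = A * B.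
Proof. unfold Re, Cconj, cpol, Cmult; simpl. pose proof (sin2_cos2 th) as H. unfold Rsqr in H. transitivity (A * B * (sin th * sin th + cos th * cos th)); [ring | rewrite H; ring]. Qed.
Lemma g_cpol_I A B th : Re (Cconj (cpol A th) * cpolI B th) = 0.
Proof. unfold Re, Cconj, cpol, cpolI, Cmult; simpl. ring. Qed.
Lemma g_I_cpol A B th : Re (Cconj (cpolI A th) * cpol B th) = 0.
Proof. unfold Re, Cconj, cpol, cpolI, Cmult; simpl. ring. Qed.
Lemma g_I_I A B th : Re (Cconj (cpolI A th) * cpolI B th) = A * B.
Proof. unfold Re, Cconj, cpolI, Cmult; simpl. pose proof (sin2_cos2 th) as H. unfold Rsqr in H. transitivity (A * B * (sin th * sin th + cos th * cos th)); [ring | rewrite H; ring]. Qed.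

Definition Dgen (u1 u2 u3 v1 v2 v3 w1 w2 w3 : R) : R :=
  u1 * (v2 * w3 - v3 * w2) - v1 * (u2 * w3 - u3 * w2) + w1 * (u2 * v3 - u3 * v2).

Lemma Im_Omega_gen u1 u2 u3 v1 v2 v3 w1 w2 w3 t1 t2 t3 :
  Im (Omega3 (cpol u1 t1, cpol u2 t2, cpol u3 t3) (cpolI v1 t1, cpolI v2 t2, cpolI v3 t3)
             (cpol w1 t1, cpol w2 t2, cpol w3 t3))
  = cos (t1 + t2 + t3) * Dgen u1 u2 u3 v1 v2 v3 w1 w2 w3.
Proof.
  unfold Omega3, Im, cpol, cpolI, Dgen, Cmult, Cminus, Cplus, Copp; simpl.
  repeat rewrite sin_plus; repeat rewrite cos_plus; repeat rewrite sin_plus. ring.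
Qed.

Lemma Re_Omega_gen u1 u2 u3 v1 v2 v3 w1 w2 w3 t1 t2 t3 :
  Re (Omega3 (cpol u1 t1, cpol u2 t2, cpol u3 t3) (cpolI v1 t1, cpolI v2 t2, cpolI v3 t3)
             (cpol w1 t1, cpol w2 t2, cpol w3 t3))
  = - sin (t1 + t2 + t3) * Dgen u1 u2 u3 v1 v2 v3 w1 w2 w3.
Proof.
  unfold Omega3, Re, cpol, cpolI, Dgen, Cmult, Cminus, Cplus, Copp; simpl.
  repeat rewrite sin_plus; repeat rewrite cos_plus; repeat rewrite sin_plus. ring.
Qed.

Lemma der_cpol_r X th r : @is_derive R_AbsRing CRNM (fun x => cpol (x * X) th) r (cpol X th).
Proof. unfold cpol. apply is_derive_pair'; auto_derive; try easy; ring. Qed.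

Lemma der_cpol_s A B s : @is_derive R_AbsRing CRNM (fun x => cpol A (B * x)) s (cpolI (A * B) (B * s)).
Proof. unfold cpol, cpolI. apply is_derive_pair'; auto_derive; try easy; ring. Qed.

Lemma der_cpol_t (X : R -> R) dX r th t : is_derive X t dX ->
  @is_derive R_AbsRing CRNM (fun x => cpol (r * X x) th) t (cpol (r * dX) th).
Proof.
  intros H. unfold cpol. apply is_derive_pair'.
  - apply (is_derive_scal_l (fun x => r * X x) _ _ (cos th)). apply is_derive_scal. exact H.
  - apply (is_derive_scal_l (fun x => r * X x) _ _ (sin th)). apply is_derive_scal. exact H.
Qed.


Lemma der_triple (f1 f2 f3 : R -> C) l1 l2 l3 x :
  @is_derive R_AbsRing CRNM f1 x l1 -> @is_derive R_AbsRing CRNM f2 x l2 -> @is_derive R_AbsRing CRNM f3 x l3 ->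
  @is_derive R_AbsRing C3NM (fun y => (f1 y, f2 y, f3 y) : C3) x ((l1, l2, l3) : C3).
Proof.
  intros H1 H2 H3. apply (@is_derive_pair' (prod_NormedModule R_AbsRing CRNM CRNM) CRNM (fun y => (f1 y, f2 y)) f3).
  apply (@is_derive_pair' CRNM CRNM); auto. auto.
Qed.




Lemma I1 (B2 B3 C1 C2 C3 A K sn cn dn : R)
  (HB : 0 < B3 < B2)
  (hC1 : C1^2 = 3*B2/(2*B2+B3))
  (hC2 : C2^2 = 3*(B2+B3)/(2*B2+B3))
  (hC3 : C3^2 = 3*(B2+B3)/(B2+2*B3))
  (hA : A^2 = B2*(B2+2*B3))
  (hK : K^2 = (B2-B3)*(B2+B3)/(B2*(B2+2*B3)))
  (hcn : cn^2 = 1 - sn^2)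
  (hdn : dn^2 = 1 - K^2*sn^2) : (C1*dn)^2 + (C2*cn)^2 + (C3*sn)^2 = 3.
Proof.
  replace ((C1*dn)^2 + (C2*cn)^2 + (C3*sn)^2) with (C1^2*dn^2 + C2^2*cn^2 + C3^2*sn^2) by ring.
  rewrite hdn, hcn, hC1, hC2, hC3, hK. field. split; nra.
Qed.

Lemma I0 (B2 B3 C1 C2 C3 A K sn cn dn : R)
  (HB : 0 < B3 < B2)
  (hC1 : C1^2 = 3*B2/(2*B2+B3))
  (hC2 : C2^2 = 3*(B2+B3)/(2*B2+B3))
  (hC3 : C3^2 = 3*(B2+B3)/(B2+2*B3))
  (hA : A^2 = B2*(B2+2*B3))
  (hK : K^2 = (B2-B3)*(B2+B3)/(B2*(B2+2*B3)))
  (hcn : cn^2 = 1 - sn^2)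
  (hdn : dn^2 = 1 - K^2*sn^2) : (C1*dn)*(C1*(A*-(K^2*sn*cn))) + (C2*cn)*(C2*(A*-(sn*dn))) + (C3*sn)*(C3*(A*(cn*dn))) = 0.
Proof.
  replace ((C1*dn)*(C1*(A*-(K^2*sn*cn))) + (C2*cn)*(C2*(A*-(sn*dn))) + (C3*sn)*(C3*(A*(cn*dn))))
    with (A*sn*cn*dn*(C3^2 - C2^2 - K^2*C1^2)) by ring.
  replace (C3^2 - C2^2 - K^2*C1^2) with 0. ring.
  rewrite hC1, hC2, hC3, hK. field. split; nra.
Qed.

Lemma I3 (B2 B3 C1 C2 C3 A K sn cn dn : R)
  (HB : 0 < B3 < B2)
  (hC1 : C1^2 = 3*B2/(2*B2+B3))
  (hC2 : C2^2 = 3*(B2+B3)/(2*B2+B3))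
  (hC3 : C3^2 = 3*(B2+B3)/(B2+2*B3))
  (hA : A^2 = B2*(B2+2*B3))
  (hK : K^2 = (B2-B3)*(B2+B3)/(B2*(B2+2*B3)))
  (hcn : cn^2 = 1 - sn^2)
  (hdn : dn^2 = 1 - K^2*sn^2) : (C1*(A*-(K^2*sn*cn)))^2 + (C2*(A*-(sn*dn)))^2 + (C3*(A*(cn*dn)))^2
  = (-B2-B3)^2*(C1*dn)^2 + B2^2*(C2*cn)^2 + B3^2*(C3*sn)^2.
Proof.
  replace ((C1*(A*-(K^2*sn*cn)))^2 + (C2*(A*-(sn*dn)))^2 + (C3*(A*(cn*dn)))^2)
    with (A^2*(C1^2*(K^2)^2*sn^2*cn^2 + C2^2*sn^2*dn^2 + C3^2*cn^2*dn^2)) by ring.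
  replace ((-B2-B3)^2*(C1*dn)^2 + B2^2*(C2*cn)^2 + B3^2*(C3*sn)^2)
    with ((-B2-B3)^2*C1^2*dn^2 + B2^2*C2^2*cn^2 + B3^2*C3^2*sn^2) by ring.
  rewrite hdn, hcn, hC1, hC2, hC3, hA, hK. field. split; nra.
Qed.


Lemma I4 (B2 B3 C1 C2 C3 A K sn cn dn : R)
  (HB : 0 < B3 < B2)
  (hC1 : C1^2 = 3*B2/(2*B2+B3))
  (hC2 : C2^2 = 3*(B2+B3)/(2*B2+B3))
  (hC3 : C3^2 = 3*(B2+B3)/(B2+2*B3))
  (hA : A^2 = B2*(B2+2*B3))
  (hK : K^2 = (B2-B3)*(B2+B3)/(B2*(B2+2*B3)))
  (hcn : cn^2 = 1 - sn^2)
  (hdn : dn^2 = 1 - K^2*sn^2)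
  (pC : 0 < C1 /\ 0 < C2 /\ 0 < C3 /\ 0 < A) : Dgen (C1*dn) (C2*cn) (C3*sn) ((-B2-B3)*(C1*dn)) (B2*(C2*cn)) (B3*(C3*sn))
   (C1*(A*-(K^2*sn*cn))) (C2*(A*-(sn*dn))) (C3*(A*(cn*dn)))
  = sqrt 3 * ((-B2-B3)^2*(C1*dn)^2 + B2^2*(C2*cn)^2 + B3^2*(C3*sn)^2).
Proof.
  set (B1 := -B2-B3).
  set (det' := cn^2*dn^2*(B2-B1) + sn^2*dn^2*(B3-B1) + K^2*sn^2*cn^2*(B2-B3)).
  assert (E : Dgen (C1*dn) (C2*cn) (C3*sn) (B1*(C1*dn)) (B2*(C2*cn)) (B3*(C3*sn))
   (C1*(A*-(K^2*sn*cn))) (C2*(A*-(sn*dn))) (C3*(A*(cn*dn))) = C1*C2*C3*A*det').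
  { unfold Dgen, det'. ring. }
  rewrite E.
  set (Bs := B1^2*(C1*dn)^2 + B2^2*(C2*cn)^2 + B3^2*(C3*sn)^2).
  assert (Hd : 0 <= det').
  { unfold det', B1. pose proof (pow2_ge_0 cn). pose proof (pow2_ge_0 dn). pose proof (pow2_ge_0 sn). pose proof (pow2_ge_0 K).
    assert (0 <= cn^2*dn^2) by (apply Rmult_le_pos; auto).
    assert (0 <= sn^2*dn^2) by (apply Rmult_le_pos; auto).
    assert (0 <= K^2*sn^2*cn^2) by (apply Rmult_le_pos; [apply Rmult_le_pos|]; assumption).
    apply Rplus_le_le_0_compat; [apply Rplus_le_le_0_compat|]; apply Rmult_le_pos; first [assumption | lra]. }
  assert (HBs : 0 <= Bs).
  { unfold Bs. pose proof (pow2_ge_0 (B1*(C1*dn))). pose proof (pow2_ge_0 (B2*(C2*cn))). pose proof (pow2_ge_0 (B3*(C3*sn))).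
    rewrite !Rpow_mult_distr in *. lra. }
  assert (Hsq : (C1*C2*C3*A*det')^2 = 3 * Bs^2).
  { replace ((C1*C2*C3*A*det')^2) with (C1^2*C2^2*C3^2*A^2*det'^2) by ring.
    unfold Bs, det', B1.
    replace ((-B2-B3)^2*(C1*dn)^2 + B2^2*(C2*cn)^2 + B3^2*(C3*sn)^2)
      with ((-B2-B3)^2*C1^2*dn^2 + B2^2*C2^2*cn^2 + B3^2*C3^2*sn^2) by ring.
    rewrite hdn, hcn, hC1, hC2, hC3, hA, hK. field. split; nra. }
  destruct pC as (p1 & p2 & p3 & p4).
  assert (0 <= C1*C2*C3*A*det') by (repeat apply Rmult_le_pos; lra).
  pose proof (sqrt_lt_R0 3 ltac:(lra)) as Hs3. pose proof (sqrt_sqrt 3 ltac:(lra)) as Hs3'.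
  assert (0 <= sqrt 3 * Bs) by (apply Rmult_le_pos; lra).
  assert (Hsq2 : (sqrt 3 * Bs)^2 = 3 * Bs^2) by (replace ((sqrt 3 * Bs)^2) with (sqrt 3 * sqrt 3 * Bs^2) by ring; rewrite Hs3'; ring).
  nra.
Qed.

Definition cc1 b1 b2 b3 := sqrt ((a3 b1 b2 b3 - a1 b1 b2 b3) / a3 b1 b2 b3).
Definition cc2 b1 b2 b3 := sqrt ((a3 b1 b2 b3 - a2 b1 b2 b3) / a3 b1 b2 b3).
Definition cc3 b1 b2 b3 := sqrt ((a2 b1 b2 b3 - a3 b1 b2 b3) / a2 b1 b2 b3).

Record Consts (b1 b2 b3 : Z) : Prop := mkConsts {
  cB1 : IZR b1 = - IZR b2 - IZR b3;
  cB : 0 < IZR b3 < IZR b2;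
  cC1 : cc1 b1 b2 b3 ^ 2 = 3 * IZR b2 / (2 * IZR b2 + IZR b3);
  cC2 : cc2 b1 b2 b3 ^ 2 = 3 * (IZR b2 + IZR b3) / (2 * IZR b2 + IZR b3);
  cC3 : cc3 b1 b2 b3 ^ 2 = 3 * (IZR b2 + IZR b3) / (IZR b2 + 2 * IZR b3);
  cA : aa b1 b2 b3 ^ 2 = IZR b2 * (IZR b2 + 2 * IZR b3);
  cK : bb b1 b2 b3 ^ 2 = (IZR b2 - IZR b3) * (IZR b2 + IZR b3) / (IZR b2 * (IZR b2 + 2 * IZR b3));
  pC1 : 0 < cc1 b1 b2 b3;
  pC2 : 0 < cc2 b1 b2 b3;
  pC3 : 0 < cc3 b1 b2 b3;
  pA : 0 < aa b1 b2 b3;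
  pK : 0 < bb b1 b2 b3;
  pK1 : bb b1 b2 b3 < 1;
  dA : aa b1 b2 b3 ^ 2 = a2 b1 b2 b3 * (a1 b1 b2 b3 - a3 b1 b2 b3);
  dK : bb b1 b2 b3 ^ 2 = a1 b1 b2 b3 * (a2 b1 b2 b3 - a3 b1 b2 b3)
                     / (a2 b1 b2 b3 * (a1 b1 b2 b3 - a3 b1 b2 b3))
}.

Lemma sqrt_facts x : 0 < x -> 0 < sqrt x /\ sqrt x ^ 2 = x.
Proof. intros H. split. apply sqrt_lt_R0; auto. apply pow2_sqrt; lra. Qed.

Lemma div_lt_1 n d : 0 < d -> n < d -> n / d < 1.
Proof. intros Hd H. unfold Rdiv. apply (Rmult_lt_reg_r d); auto. rewrite Rmult_assoc, Rinv_l; lra. Qed.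

Lemma consts_ok b1 b2 b3 : (b2 > b3)%Z -> (b3 > 0)%Z -> (0 > b1)%Z -> (b1 + b2 + b3 = 0)%Z -> Consts b1 b2 b3.
Proof.
  intros h1 h2 h3 h4.
  assert (E1 : IZR b1 = - IZR b2 - IZR b3).
  { replace b1 with (- b2 - b3)%Z by lia. rewrite minus_IZR, opp_IZR. ring. }
  assert (HB : 0 < IZR b3 < IZR b2). { split; apply IZR_lt; lia. }
  set (B2 := IZR b2) in *. set (B3 := IZR b3) in *.
  pose proof (sqrt_lt_R0 3 ltac:(lra)) as Hs.
  pose proof (sqrt_sqrt 3 ltac:(lra)) as Hs'.
  set (q := / sqrt 3).
  assert (Hq : q * q = / 3). { unfold q. rewrite <- Rinv_mult, Hs'. reflexivity. }
  assert (Hq0 : 0 < q) by (apply Rinv_0_lt_compat; auto).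
  assert (R1 : (a3 b1 b2 b3 - a1 b1 b2 b3) / a3 b1 b2 b3 = 3 * B2 / (2 * B2 + B3)).
  { unfold a1, a3. fold q. fold B2 B3. rewrite E1. field. split; lra. }
  assert (R2 : (a3 b1 b2 b3 - a2 b1 b2 b3) / a3 b1 b2 b3 = 3 * (B2 + B3) / (2 * B2 + B3)).
  { unfold a2, a3. fold q. fold B2 B3. rewrite E1. field. split; lra. }
  assert (R3 : (a2 b1 b2 b3 - a3 b1 b2 b3) / a2 b1 b2 b3 = 3 * (B2 + B3) / (B2 + 2 * B3)).
  { unfold a2, a3. fold q. fold B2 B3. rewrite E1. field. split; lra. }
  assert (RA : a2 b1 b2 b3 * (a1 b1 b2 b3 - a3 b1 b2 b3) = B2 * (B2 + 2 * B3)).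
  { unfold a1, a2, a3. fold q. fold B2 B3. rewrite E1.
    transitivity (q * q * ((- B2 - B3 - B3) * ((B3 - B2) - (B2 - (- B2 - B3))))). ring.
    rewrite Hq. field. }
  assert (RK : a1 b1 b2 b3 * (a2 b1 b2 b3 - a3 b1 b2 b3) / (a2 b1 b2 b3 * (a1 b1 b2 b3 - a3 b1 b2 b3))
               = (B2 - B3) * (B2 + B3) / (B2 * (B2 + 2 * B3))).
  { unfold a1, a2, a3. fold q. fold B2 B3. rewrite E1. field. repeat split; nra. }
  assert (P1 : 0 < 3 * B2 / (2 * B2 + B3)) by (apply Rdiv_lt_0_compat; lra).
  assert (P2 : 0 < 3 * (B2 + B3) / (2 * B2 + B3)) by (apply Rdiv_lt_0_compat; lra).
  assert (P3 : 0 < 3 * (B2 + B3) / (B2 + 2 * B3)) by (apply Rdiv_lt_0_compat; lra).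
  assert (PA : 0 < B2 * (B2 + 2 * B3)) by nra.
  assert (PK : 0 < (B2 - B3) * (B2 + B3) / (B2 * (B2 + 2 * B3))) by (apply Rdiv_lt_0_compat; nra).
  assert (PK1 : (B2 - B3) * (B2 + B3) / (B2 * (B2 + 2 * B3)) < 1) by (apply div_lt_1; nra).
  destruct (sqrt_facts _ P1), (sqrt_facts _ P2), (sqrt_facts _ P3), (sqrt_facts _ PA), (sqrt_facts _ PK).
  constructor; unfold cc1, cc2, cc3, aa, bb; change (IZR b2) with B2; change (IZR b3) with B3;
    rewrite ?R1, ?R2, ?R3, ?RK, ?RA; auto.
  - rewrite <- sqrt_1. apply sqrt_lt_1_alt. lra.
Qed.

Definition sn_ b1 b2 b3 t := jsn (aa b1 b2 b3 * t) (bb b1 b2 b3).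
Definition cn_ b1 b2 b3 t := jcn (aa b1 b2 b3 * t) (bb b1 b2 b3).
Definition dn_ b1 b2 b3 t := jdn (aa b1 b2 b3 * t) (bb b1 b2 b3).
Definition x1 b1 b2 b3 t := cc1 b1 b2 b3 * dn_ b1 b2 b3 t.
Definition x2 b1 b2 b3 t := cc2 b1 b2 b3 * cn_ b1 b2 b3 t.
Definition x3 b1 b2 b3 t := cc3 b1 b2 b3 * sn_ b1 b2 b3 t.
Definition dx1 b1 b2 b3 t := cc1 b1 b2 b3 * (aa b1 b2 b3 * - (bb b1 b2 b3 ^ 2 * sn_ b1 b2 b3 t * cn_ b1 b2 b3 t)).
Definition dx2 b1 b2 b3 t := cc2 b1 b2 b3 * (aa b1 b2 b3 * - (sn_ b1 b2 b3 t * dn_ b1 b2 b3 t)).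
Definition dx3 b1 b2 b3 t := cc3 b1 b2 b3 * (aa b1 b2 b3 * (cn_ b1 b2 b3 t * dn_ b1 b2 b3 t)).

Lemma PhiN_expl b1 b2 b3 r s t : PhiN b1 b2 b3 r s t =
  (cpol (r * x1 b1 b2 b3 t) (IZR b1 * s), cpol (r * x2 b1 b2 b3 t) (IZR b2 * s),
   cpol (r * x3 b1 b2 b3 t) (IZR b3 * s)).
Proof.
  unfold PhiN, x1, x2, x3, cc1, cc2, cc3, dn_, cn_, sn_. cbv zeta.
  rewrite !RtoC_expi. f_equal; [f_equal|]; f_equal; ring.
Qed.

Definition Xr b1 b2 b3 (r s t : R) : C3 :=
  (cpol (x1 b1 b2 b3 t) (IZR b1 * s), cpol (x2 b1 b2 b3 t) (IZR b2 * s), cpol (x3 b1 b2 b3 t) (IZR b3 * s)).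
Definition Xs b1 b2 b3 (r s t : R) : C3 :=
  (cpolI (r * x1 b1 b2 b3 t * IZR b1) (IZR b1 * s), cpolI (r * x2 b1 b2 b3 t * IZR b2) (IZR b2 * s),
   cpolI (r * x3 b1 b2 b3 t * IZR b3) (IZR b3 * s)).
Definition Xt b1 b2 b3 (r s t : R) : C3 :=
  (cpol (r * dx1 b1 b2 b3 t) (IZR b1 * s), cpol (r * dx2 b1 b2 b3 t) (IZR b2 * s), cpol (r * dx3 b1 b2 b3 t) (IZR b3 * s)).

Lemma comp_lin (f : R -> R) a t l : is_derive f (a * t) l -> is_derive (fun x => f (a * x)) t (a * l).
Proof.
  intros H. apply is_derive_eq with (scal a l).
  - apply (is_derive_comp f (fun x => a * x) t l a). exact H.
    apply is_derive_eq with (a * 1). apply is_derive_scal. apply (@is_derive_id R_AbsRing). apply Rmult_1_r.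
  - reflexivity.
Qed.

Lemma der_sn b1 b2 b3 t : bb b1 b2 b3 ^ 2 < 1 ->
  is_derive (sn_ b1 b2 b3) t (aa b1 b2 b3 * (cn_ b1 b2 b3 t * dn_ b1 b2 b3 t)).
Proof. intros Hk. unfold sn_, cn_, dn_. apply (comp_lin (fun v => jsn v _)). apply jsn_deriv; auto. Qed.
Lemma der_cn b1 b2 b3 t : bb b1 b2 b3 ^ 2 < 1 ->
  is_derive (cn_ b1 b2 b3) t (aa b1 b2 b3 * - (sn_ b1 b2 b3 t * dn_ b1 b2 b3 t)).
Proof. intros Hk. unfold sn_, cn_, dn_. apply (comp_lin (fun v => jcn v _)). apply jcn_deriv; auto. Qed.
Lemma der_dn b1 b2 b3 t : bb b1 b2 b3 ^ 2 < 1 ->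
  is_derive (dn_ b1 b2 b3) t (aa b1 b2 b3 * - (bb b1 b2 b3 ^ 2 * sn_ b1 b2 b3 t * cn_ b1 b2 b3 t)).
Proof. intros Hk. unfold sn_, cn_, dn_. apply (comp_lin (fun v => jdn v _)). apply jdn_deriv; auto. Qed.

Lemma der_x1 b1 b2 b3 t : bb b1 b2 b3 ^ 2 < 1 -> is_derive (x1 b1 b2 b3) t (dx1 b1 b2 b3 t).
Proof. intros Hk. unfold x1, dx1. apply is_derive_scal. apply der_dn; auto. Qed.
Lemma der_x2 b1 b2 b3 t : bb b1 b2 b3 ^ 2 < 1 -> is_derive (x2 b1 b2 b3) t (dx2 b1 b2 b3 t).
Proof. intros Hk. unfold x2, dx2. apply is_derive_scal. apply der_cn; auto. Qed.
Lemma der_x3 b1 b2 b3 t : bb b1 b2 b3 ^ 2 < 1 -> is_derive (x3 b1 b2 b3) t (dx3 b1 b2 b3 t).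
Proof. intros Hk. unfold x3, dx3. apply is_derive_scal. apply der_sn; auto. Qed.

Lemma PhiN_der_r b1 b2 b3 r s t : @is_derive R_AbsRing C3NM (fun x => PhiN b1 b2 b3 x s t) r (Xr b1 b2 b3 r s t).
Proof.
  apply (is_derive_ext (fun x => (cpol (x * x1 b1 b2 b3 t) (IZR b1 * s), cpol (x * x2 b1 b2 b3 t) (IZR b2 * s),
   cpol (x * x3 b1 b2 b3 t) (IZR b3 * s)) : C3)).
  intros; rewrite PhiN_expl; reflexivity.
  apply der_triple; apply der_cpol_r.
Qed.

Lemma PhiN_der_s b1 b2 b3 r s t : @is_derive R_AbsRing C3NM (fun x => PhiN b1 b2 b3 r x t) s (Xs b1 b2 b3 r s t).
Proof.
  apply (is_derive_ext (fun x => (cpol (r * x1 b1 b2 b3 t) (IZR b1 * x), cpol (r * x2 b1 b2 b3 t) (IZR b2 * x),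
   cpol (r * x3 b1 b2 b3 t) (IZR b3 * x)) : C3)).
  intros; rewrite PhiN_expl; reflexivity.
  apply der_triple; apply der_cpol_s.
Qed.

Lemma PhiN_der_t b1 b2 b3 r s t : bb b1 b2 b3 ^ 2 < 1 ->
  @is_derive R_AbsRing C3NM (fun x => PhiN b1 b2 b3 r s x) t (Xt b1 b2 b3 r s t).
Proof.
  intros Hk.
  apply (is_derive_ext (fun x => (cpol (r * x1 b1 b2 b3 x) (IZR b1 * s), cpol (r * x2 b1 b2 b3 x) (IZR b2 * s),
   cpol (r * x3 b1 b2 b3 x) (IZR b3 * s)) : C3)).
  intros; rewrite PhiN_expl; reflexivity.
  apply der_triple; apply der_cpol_t; [apply der_x1|apply der_x2|apply der_x3]; auto.
Qed.

Lemma is_derive_fst' {U V : NormedModule R_AbsRing} (f : R -> U * V) x l :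
  @is_derive R_AbsRing (prod_NormedModule R_AbsRing U V) f x l -> is_derive (fun y => fst (f y)) x (fst l).
Proof.
  intros H. unfold is_derive in *.
  apply (filterdiff_comp' f fst x _ fst H (filterdiff_linear _ is_linear_fst)).
Qed.
Lemma is_derive_snd' {U V : NormedModule R_AbsRing} (f : R -> U * V) x l :
  @is_derive R_AbsRing (prod_NormedModule R_AbsRing U V) f x l -> is_derive (fun y => snd (f y)) x (snd l).
Proof.
  intros H. unfold is_derive in *.
  apply (filterdiff_comp' f snd x _ snd H (filterdiff_linear _ is_linear_snd)).
Qed.

Lemma uniq_R (f : R -> R) x l l' : is_derive f x l -> is_derive f x l' -> l = l'.
Proof. intros H H'. apply is_derive_unique in H. apply is_derive_unique in H'. congruence. Qed.

Lemma uniq_C (f : R -> C) x (l l' : C) : @is_derive R_AbsRing CRNM f x l -> @is_derive R_AbsRing CRNM f x l' -> l = l'.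
Proof.
  intros H H'. destruct l as [l1 l2], l' as [l1' l2'].
  f_equal.
  - apply (uniq_R (fun y => fst (f y)) x). apply (is_derive_fst' f x (l1, l2) H). apply (is_derive_fst' f x (l1', l2') H').
  - apply (uniq_R (fun y => snd (f y)) x). apply (is_derive_snd' f x (l1, l2) H). apply (is_derive_snd' f x (l1', l2') H').
Qed.

Lemma uniq_C3 (f : R -> C3) x (l l' : C3) : @is_derive R_AbsRing C3NM f x l -> @is_derive R_AbsRing C3NM f x l' -> l = l'.
Proof.
  intros H H'. destruct l as [[l1 l2] l3], l' as [[l1' l2'] l3'].
  pose proof (is_derive_fst' f x _ H) as F. pose proof (is_derive_fst' f x _ H') as F'.
  pose proof (is_derive_snd' f x _ H) as S. pose proof (is_derive_snd' f x _ H') as S'.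
  simpl in *.
  pose proof (is_derive_fst' _ x _ F) as F1. pose proof (is_derive_fst' _ x _ F') as F1'.
  pose proof (is_derive_snd' _ x _ F) as F2. pose proof (is_derive_snd' _ x _ F') as F2'.
  simpl in *.
  f_equal; [f_equal|].
  - exact (uniq_C _ x _ _ F1 F1').
  - exact (uniq_C _ x _ _ F2 F2').
  - exact (uniq_C _ x _ _ S S').
Qed.

Lemma g3_add u v w : g3 (c3add u v) w = g3 u w + g3 v w.
Proof.
  destruct u as [[[u1 u1'] [u2 u2']] [u3 u3']], v as [[[v1 v1'] [v2 v2']] [v3 v3']],
    w as [[[w1 w1'] [w2 w2']] [w3 w3']].
  unfold g3, c3add, Re, Cconj, Cmult, Cplus; simpl. ring.
Qed.
Lemma g3_scal l u w : g3 (c3scal l u) w = l * g3 u w.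
Proof.
  destruct u as [[[u1 u1'] [u2 u2']] [u3 u3']], w as [[[w1 w1'] [w2 w2']] [w3 w3']].
  unfold g3, c3scal, Re, Cconj, Cmult, RtoC; simpl. ring.
Qed.
Lemma g3_zero w : g3 c3zero w = 0.
Proof.
  destruct w as [[[w1 w1'] [w2 w2']] [w3 w3']].
  unfold g3, c3zero, Re, Cconj, Cmult, RtoC; simpl. ring.
Qed.

Lemma g3_PP a1 a2 a3 b1 b2 b3 t1 t2 t3 :
  g3 (cpol a1 t1, cpol a2 t2, cpol a3 t3) (cpol b1 t1, cpol b2 t2, cpol b3 t3) = a1 * b1 + a2 * b2 + a3 * b3.
Proof. unfold g3. rewrite !g_cpol. reflexivity. Qed.
Lemma g3_PI a1 a2 a3 b1 b2 b3 t1 t2 t3 :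
  g3 (cpol a1 t1, cpol a2 t2, cpol a3 t3) (cpolI b1 t1, cpolI b2 t2, cpolI b3 t3) = 0.
Proof. unfold g3. rewrite !g_cpol_I. ring. Qed.
Lemma g3_IP a1 a2 a3 b1 b2 b3 t1 t2 t3 :
  g3 (cpolI a1 t1, cpolI a2 t2, cpolI a3 t3) (cpol b1 t1, cpol b2 t2, cpol b3 t3) = 0.
Proof. unfold g3. rewrite !g_I_cpol. ring. Qed.
Lemma g3_II a1 a2 a3 b1 b2 b3 t1 t2 t3 :
  g3 (cpolI a1 t1, cpolI a2 t2, cpolI a3 t3) (cpolI b1 t1, cpolI b2 t2, cpolI b3 t3) = a1 * b1 + a2 * b2 + a3 * b3.
Proof. unfold g3. rewrite !g_I_I. reflexivity. Qed.

Lemma cscal_PhiN b1 b2 b3 l r s t : c3scal l (PhiN b1 b2 b3 r s t) = PhiN b1 b2 b3 (l * r) s t.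
Proof.
  rewrite !PhiN_expl. unfold c3scal. rewrite !RtoC_cpol. f_equal; [f_equal|]; f_equal; ring.
Qed.

Definition Bq b1 b2 b3 t := IZR b1 ^ 2 * x1 b1 b2 b3 t ^ 2 + IZR b2 ^ 2 * x2 b1 b2 b3 t ^ 2 + IZR b3 ^ 2 * x3 b1 b2 b3 t ^ 2.

Record Idents (b1 b2 b3 : Z) (t : R) : Prop := mkIdents {
  iS : x1 b1 b2 b3 t ^ 2 + x2 b1 b2 b3 t ^ 2 + x3 b1 b2 b3 t ^ 2 = 3;
  i0 : x1 b1 b2 b3 t * dx1 b1 b2 b3 t + x2 b1 b2 b3 t * dx2 b1 b2 b3 t + x3 b1 b2 b3 t * dx3 b1 b2 b3 t = 0;
  i3 : dx1 b1 b2 b3 t ^ 2 + dx2 b1 b2 b3 t ^ 2 + dx3 b1 b2 b3 t ^ 2 = Bq b1 b2 b3 t;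
  i4 : Dgen (x1 b1 b2 b3 t) (x2 b1 b2 b3 t) (x3 b1 b2 b3 t)
         (IZR b1 * x1 b1 b2 b3 t) (IZR b2 * x2 b1 b2 b3 t) (IZR b3 * x3 b1 b2 b3 t)
         (dx1 b1 b2 b3 t) (dx2 b1 b2 b3 t) (dx3 b1 b2 b3 t) = sqrt 3 * Bq b1 b2 b3 t;
  iB : 0 < Bq b1 b2 b3 t;
  ix1 : 0 < x1 b1 b2 b3 t
}.

Lemma idents_ok b1 b2 b3 t : Consts b1 b2 b3 -> Idents b1 b2 b3 t.
Proof.
  intros C.
  pose proof (cB1 _ _ _ C) as E1. pose proof (cB _ _ _ C) as HB.
  pose proof (cC1 _ _ _ C) as h1. pose proof (cC2 _ _ _ C) as h2. pose proof (cC3 _ _ _ C) as h3.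
  pose proof (cA _ _ _ C) as hA. pose proof (cK _ _ _ C) as hK.
  pose proof (pK _ _ _ C). pose proof (pK1 _ _ _ C).
  pose proof (pC1 _ _ _ C). pose proof (pC2 _ _ _ C). pose proof (pC3 _ _ _ C). pose proof (pA _ _ _ C).
  assert (Hk : bb b1 b2 b3 ^ 2 < 1) by nra.
  assert (hcn : cn_ b1 b2 b3 t ^ 2 = 1 - sn_ b1 b2 b3 t ^ 2) by (unfold cn_, sn_; pose proof (jsn_jcn (bb b1 b2 b3) (aa b1 b2 b3 * t)); lra).
  assert (hdn : dn_ b1 b2 b3 t ^ 2 = 1 - bb b1 b2 b3 ^ 2 * sn_ b1 b2 b3 t ^ 2) by (unfold dn_, sn_; apply jdn_sq; auto).
  assert (Hx1 : 0 < x1 b1 b2 b3 t) by (unfold x1, dn_; apply Rmult_lt_0_compat; auto; apply jdn_pos; auto).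
  assert (pC : 0 < cc1 b1 b2 b3 /\ 0 < cc2 b1 b2 b3 /\ 0 < cc3 b1 b2 b3 /\ 0 < aa b1 b2 b3) by auto.
  constructor.
  - unfold x1, x2, x3. apply (I1 (IZR b2) (IZR b3) _ _ _ (aa b1 b2 b3) _ _ _ _ HB h1 h2 h3 hA hK hcn hdn).
  - unfold x1, x2, x3, dx1, dx2, dx3. apply (I0 (IZR b2) (IZR b3) _ _ _ (aa b1 b2 b3) _ _ _ _ HB h1 h2 h3 hA hK hcn hdn).
  - unfold Bq, x1, x2, x3, dx1, dx2, dx3. rewrite E1. apply (I3 (IZR b2) (IZR b3) _ _ _ (aa b1 b2 b3) _ _ _ _ HB h1 h2 h3 hA hK hcn hdn).
  - unfold Bq, x1, x2, x3, dx1, dx2, dx3. rewrite E1. apply (I4 (IZR b2) (IZR b3) _ _ _ (aa b1 b2 b3) _ _ _ _ HB h1 h2 h3 hA hK hcn hdn pC).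
  - unfold Bq.
    pose proof (pow2_ge_0 (x2 b1 b2 b3 t)). pose proof (pow2_ge_0 (x3 b1 b2 b3 t)).
    pose proof (pow2_ge_0 (IZR b2)). pose proof (pow2_ge_0 (IZR b3)).
    assert (0 < IZR b1 ^ 2) by (rewrite E1; nra).
    assert (0 < x1 b1 b2 b3 t ^ 2) by (apply pow_lt; lra).
    assert (0 < IZR b1 ^ 2 * x1 b1 b2 b3 t ^ 2) by (apply Rmult_lt_0_compat; auto).
    assert (0 <= IZR b2 ^ 2 * x2 b1 b2 b3 t ^ 2) by (apply Rmult_le_pos; auto).
    assert (0 <= IZR b3 ^ 2 * x3 b1 b2 b3 t ^ 2) by (apply Rmult_le_pos; auto).
    lra.
  - exact Hx1.
Qed.

Lemma cont_of_der (f : R -> R) (df : R -> R) : (forall x, is_derive f x (df x)) -> forall x, continuous f x.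
Proof. intros H x. apply (@ex_derive_continuous R_AbsRing R_NormedModule). eexists; apply H. Qed.

Lemma cont_sn b1 b2 b3 : bb b1 b2 b3 ^ 2 < 1 -> forall x, continuous (sn_ b1 b2 b3) x.
Proof. intros Hk. eapply cont_of_der. intros; apply der_sn; auto. Qed.
Lemma cont_cn b1 b2 b3 : bb b1 b2 b3 ^ 2 < 1 -> forall x, continuous (cn_ b1 b2 b3) x.
Proof. intros Hk. eapply cont_of_der. intros; apply der_cn; auto. Qed.
Lemma cont_dn b1 b2 b3 : bb b1 b2 b3 ^ 2 < 1 -> forall x, continuous (dn_ b1 b2 b3) x.
Proof. intros Hk. eapply cont_of_der. intros; apply der_dn; auto. Qed.
Lemma cont_x1 b1 b2 b3 : bb b1 b2 b3 ^ 2 < 1 -> forall x, continuous (x1 b1 b2 b3) x.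
Proof. intros Hk. eapply cont_of_der. intros; apply der_x1; auto. Qed.
Lemma cont_x2 b1 b2 b3 : bb b1 b2 b3 ^ 2 < 1 -> forall x, continuous (x2 b1 b2 b3) x.
Proof. intros Hk. eapply cont_of_der. intros; apply der_x2; auto. Qed.
Lemma cont_x3 b1 b2 b3 : bb b1 b2 b3 ^ 2 < 1 -> forall x, continuous (x3 b1 b2 b3) x.
Proof. intros Hk. eapply cont_of_der. intros; apply der_x3; auto. Qed.

Lemma cont_const' (c : R) x : continuous (fun _ : R => c) x.
Proof. apply continuous_const. Qed.
Lemma cont_id' x : continuous (fun y : R => y) x.
Proof. apply continuous_id. Qed.

Lemma cont_dx1 b1 b2 b3 : bb b1 b2 b3 ^ 2 < 1 -> forall x, continuous (dx1 b1 b2 b3) x.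
Proof.
  intros Hk x. unfold dx1. apply cont_Rmult. apply cont_const'. apply cont_Rmult. apply cont_const'.
  apply (continuous_opp (fun t => bb b1 b2 b3 ^ 2 * sn_ b1 b2 b3 t * cn_ b1 b2 b3 t)).
  apply cont_Rmult. apply cont_Rmult. apply cont_const'. apply cont_sn; auto. apply cont_cn; auto.
Qed.
Lemma cont_dx2 b1 b2 b3 : bb b1 b2 b3 ^ 2 < 1 -> forall x, continuous (dx2 b1 b2 b3) x.
Proof.
  intros Hk x. unfold dx2. apply cont_Rmult. apply cont_const'. apply cont_Rmult. apply cont_const'.
  apply (continuous_opp (fun t => sn_ b1 b2 b3 t * dn_ b1 b2 b3 t)).
  apply cont_Rmult. apply cont_sn; auto. apply cont_dn; auto.
Qed.
Lemma cont_dx3 b1 b2 b3 : bb b1 b2 b3 ^ 2 < 1 -> forall x, continuous (dx3 b1 b2 b3) x.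
Proof.
  intros Hk x. unfold dx3. apply cont_Rmult. apply cont_const'. apply cont_Rmult. apply cont_const'.
  apply cont_Rmult. apply cont_cn; auto. apply cont_dn; auto.
Qed.

Lemma cont_trig (B : R) x : continuous (fun s => cos (B * s)) x /\ continuous (fun s => sin (B * s)) x
  /\ continuous (fun s => - (B * sin (B * s))) x /\ continuous (fun s => B * cos (B * s)) x.
Proof.
  repeat split; apply (@ex_derive_continuous R_AbsRing R_NormedModule); auto_derive; auto.
Qed.

Lemma cont_cosB B x : continuous (fun s => cos (B * s)) x.
Proof. apply cont_trig. Qed.
Lemma cont_sinB B x : continuous (fun s => sin (B * s)) x.
Proof. apply cont_trig. Qed.
Lemma cont_msinB B x : continuous (fun s => - (B * sin (B * s))) x.
Proof. apply cont_trig. Qed.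
Lemma cont_BcosB B x : continuous (fun s => B * cos (B * s)) x.
Proof. apply cont_trig. Qed.

Ltac c3 al be ga :=
  apply (continuous_ext (fun p : R*R*R => al (fst (fst p)) * be (snd (fst p)) * ga (snd p)));
  [intros [[? ?] ?]; simpl; ring | apply (cont_prod3 al be ga); intros ].

Lemma cont_Xr b1 b2 b3 p : bb b1 b2 b3 ^ 2 < 1 ->
  continuous (fun p : R * R * R => Xr b1 b2 b3 (fst (fst p)) (snd (fst p)) (snd p)) p.
Proof.
  intros Hk. unfold Xr, cpol.
  apply continuous_pair'; [apply continuous_pair'|]; apply continuous_pair'.
  - c3 (fun _ : R => 1) (fun s => cos (IZR b1 * s)) (x1 b1 b2 b3); [apply cont_const' | apply cont_cosB | apply cont_x1; exact Hk].
  - c3 (fun _ : R => 1) (fun s => sin (IZR b1 * s)) (x1 b1 b2 b3); [apply cont_const' | apply cont_sinB | apply cont_x1; exact Hk].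
  - c3 (fun _ : R => 1) (fun s => cos (IZR b2 * s)) (x2 b1 b2 b3); [apply cont_const' | apply cont_cosB | apply cont_x2; exact Hk].
  - c3 (fun _ : R => 1) (fun s => sin (IZR b2 * s)) (x2 b1 b2 b3); [apply cont_const' | apply cont_sinB | apply cont_x2; exact Hk].
  - c3 (fun _ : R => 1) (fun s => cos (IZR b3 * s)) (x3 b1 b2 b3); [apply cont_const' | apply cont_cosB | apply cont_x3; exact Hk].
  - c3 (fun _ : R => 1) (fun s => sin (IZR b3 * s)) (x3 b1 b2 b3); [apply cont_const' | apply cont_sinB | apply cont_x3; exact Hk].
Qed.

Lemma cont_Xs b1 b2 b3 p : bb b1 b2 b3 ^ 2 < 1 ->
  continuous (fun p : R * R * R => Xs b1 b2 b3 (fst (fst p)) (snd (fst p)) (snd p)) p.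
Proof.
  intros Hk. unfold Xs, cpolI.
  apply continuous_pair'; [apply continuous_pair'|]; apply continuous_pair'.
  - c3 (fun r : R => r) (fun s => - (IZR b1 * sin (IZR b1 * s))) (x1 b1 b2 b3); [apply cont_id' | apply cont_msinB | apply cont_x1; exact Hk].
  - c3 (fun r : R => r) (fun s => IZR b1 * cos (IZR b1 * s)) (x1 b1 b2 b3); [apply cont_id' | apply cont_BcosB | apply cont_x1; exact Hk].
  - c3 (fun r : R => r) (fun s => - (IZR b2 * sin (IZR b2 * s))) (x2 b1 b2 b3); [apply cont_id' | apply cont_msinB | apply cont_x2; exact Hk].
  - c3 (fun r : R => r) (fun s => IZR b2 * cos (IZR b2 * s)) (x2 b1 b2 b3); [apply cont_id' | apply cont_BcosB | apply cont_x2; exact Hk].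
  - c3 (fun r : R => r) (fun s => - (IZR b3 * sin (IZR b3 * s))) (x3 b1 b2 b3); [apply cont_id' | apply cont_msinB | apply cont_x3; exact Hk].
  - c3 (fun r : R => r) (fun s => IZR b3 * cos (IZR b3 * s)) (x3 b1 b2 b3); [apply cont_id' | apply cont_BcosB | apply cont_x3; exact Hk].
Qed.

Lemma cont_Xt b1 b2 b3 p : bb b1 b2 b3 ^ 2 < 1 ->
  continuous (fun p : R * R * R => Xt b1 b2 b3 (fst (fst p)) (snd (fst p)) (snd p)) p.
Proof.
  intros Hk. unfold Xt, cpol.
  apply continuous_pair'; [apply continuous_pair'|]; apply continuous_pair'.
  - c3 (fun r : R => r) (fun s => cos (IZR b1 * s)) (dx1 b1 b2 b3); [apply cont_id' | apply cont_cosB | apply cont_dx1; exact Hk].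
  - c3 (fun r : R => r) (fun s => sin (IZR b1 * s)) (dx1 b1 b2 b3); [apply cont_id' | apply cont_sinB | apply cont_dx1; exact Hk].
  - c3 (fun r : R => r) (fun s => cos (IZR b2 * s)) (dx2 b1 b2 b3); [apply cont_id' | apply cont_cosB | apply cont_dx2; exact Hk].
  - c3 (fun r : R => r) (fun s => sin (IZR b2 * s)) (dx2 b1 b2 b3); [apply cont_id' | apply cont_sinB | apply cont_dx2; exact Hk].
  - c3 (fun r : R => r) (fun s => cos (IZR b3 * s)) (dx3 b1 b2 b3); [apply cont_id' | apply cont_cosB | apply cont_dx3; exact Hk].
  - c3 (fun r : R => r) (fun s => sin (IZR b3 * s)) (dx3 b1 b2 b3); [apply cont_id' | apply cont_sinB | apply cont_dx3; exact Hk].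
Qed.

Record Gvals b1 b2 b3 r s t : Prop := mkG {
  gRR : g3 (Xr b1 b2 b3 r s t) (Xr b1 b2 b3 r s t) = 3;
  gSR : g3 (Xs b1 b2 b3 r s t) (Xr b1 b2 b3 r s t) = 0;
  gTR : g3 (Xt b1 b2 b3 r s t) (Xr b1 b2 b3 r s t) = 0;
  gRS : g3 (Xr b1 b2 b3 r s t) (Xs b1 b2 b3 r s t) = 0;
  gSS : g3 (Xs b1 b2 b3 r s t) (Xs b1 b2 b3 r s t) = r^2 * Bq b1 b2 b3 t;
  gTS : g3 (Xt b1 b2 b3 r s t) (Xs b1 b2 b3 r s t) = 0;
  gRT : g3 (Xr b1 b2 b3 r s t) (Xt b1 b2 b3 r s t) = 0;
  gST : g3 (Xs b1 b2 b3 r s t) (Xt b1 b2 b3 r s t) = 0;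
  gTT : g3 (Xt b1 b2 b3 r s t) (Xt b1 b2 b3 r s t) = r^2 * Bq b1 b2 b3 t
}.

Lemma gvals_ok b1 b2 b3 r s t : Consts b1 b2 b3 -> Gvals b1 b2 b3 r s t.
Proof.
  intros C. destruct (idents_ok b1 b2 b3 t C) as [HS H0 H3 H4 HB Hx].
  constructor; unfold Xr, Xs, Xt; rewrite ?g3_PP, ?g3_PI, ?g3_IP, ?g3_II; auto.
  - rewrite <- HS. ring.
  - transitivity (r * (x1 b1 b2 b3 t * dx1 b1 b2 b3 t + x2 b1 b2 b3 t * dx2 b1 b2 b3 t + x3 b1 b2 b3 t * dx3 b1 b2 b3 t)).
    ring. rewrite H0. ring.
  - unfold Bq. ring.
  - transitivity (r * (x1 b1 b2 b3 t * dx1 b1 b2 b3 t + x2 b1 b2 b3 t * dx2 b1 b2 b3 t + x3 b1 b2 b3 t * dx3 b1 b2 b3 t)).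
    ring. rewrite H0. ring.
  - rewrite <- H3. ring.
Qed.

Lemma g3_PhiN b1 b2 b3 r s t : Consts b1 b2 b3 -> g3 (PhiN b1 b2 b3 r s t) (PhiN b1 b2 b3 r s t) = r^2 * 3.
Proof.
  intros C. destruct (idents_ok b1 b2 b3 t C) as [HS H0 H3 H4 HB Hx].
  rewrite PhiN_expl, g3_PP. rewrite <- HS. ring.
Qed.

Lemma is_cone_ok b1 b2 b3 : is_cone (Nset b1 b2 b3).
Proof.
  intros p l [r [s [t [Hr ->]]]] Hl. exists (l * r), s, t. split.
  apply Rmult_lt_0_compat; auto. apply cscal_PhiN.
Qed.

Lemma C1_immersion_ok b1 b2 b3 : Consts b1 b2 b3 -> C1_immersion (PhiN b1 b2 b3).
Proof.
  intros C.
  assert (Hk : bb b1 b2 b3 ^ 2 < 1) by (pose proof (pK _ _ _ C); pose proof (pK1 _ _ _ C); nra).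
  exists (Xr b1 b2 b3), (Xs b1 b2 b3), (Xt b1 b2 b3).
  intros r s t Hr.
  split. apply PhiN_der_r. split. apply PhiN_der_s. split. apply PhiN_der_t; auto.
  split. apply cont_Xr; auto. split. apply cont_Xs; auto. split. apply cont_Xt; auto.
  intros al be ga E.
  destruct (gvals_ok b1 b2 b3 r s t C).
  destruct (idents_ok b1 b2 b3 t C) as [HS H0 H3 H4 HB Hx].
  pose proof (f_equal (fun u => g3 u (Xr b1 b2 b3 r s t)) E) as GR.
  pose proof (f_equal (fun u => g3 u (Xs b1 b2 b3 r s t)) E) as GS.
  pose proof (f_equal (fun u => g3 u (Xt b1 b2 b3 r s t)) E) as GT.
  cbv beta in GR, GS, GT. rewrite !g3_add, !g3_scal, g3_zero in GR, GS, GT.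
  rewrite gRR0, gSR0, gTR0 in GR. rewrite gRS0, gSS0, gTS0 in GS. rewrite gRT0, gST0, gTT0 in GT.
  assert (0 < r^2 * Bq b1 b2 b3 t) by (apply Rmult_lt_0_compat; auto; apply pow_lt; auto).
  split; [|split]; nra.
Qed.

Lemma gram_val b1 b2 b3 r s t : Consts b1 b2 b3 ->
  gram3 (Xr b1 b2 b3 r s t) (Xs b1 b2 b3 r s t) (Xt b1 b2 b3 r s t) = 3 * (r^2 * Bq b1 b2 b3 t)^2.
Proof.
  intros C. destruct (gvals_ok b1 b2 b3 r s t C).
  unfold gram3, det3. rewrite gRR0, gSR0, gTR0, gRS0, gSS0, gTS0, gRT0, gST0, gTT0. ring.
Qed.

Lemma Im_val b1 b2 b3 r s t : Consts b1 b2 b3 ->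
  Im (Omega3 (Xr b1 b2 b3 r s t) (Xs b1 b2 b3 r s t) (Xt b1 b2 b3 r s t)) = r^2 * (sqrt 3 * Bq b1 b2 b3 t).
Proof.
  intros C. destruct (idents_ok b1 b2 b3 t C) as [HS H0 H3 H4 HB Hx].
  unfold Xr, Xs, Xt. rewrite Im_Omega_gen.
  replace (IZR b1 * s + IZR b2 * s + IZR b3 * s) with 0 by (rewrite (cB1 _ _ _ C); ring).
  rewrite cos_0. rewrite <- H4. unfold Dgen. ring.
Qed.

Lemma calibrated_ok b1 b2 b3 : Consts b1 b2 b3 -> calibrated_SL (PI / 2) (PhiN b1 b2 b3).
Proof.
  intros C.
  assert (Hk : bb b1 b2 b3 ^ 2 < 1) by (pose proof (pK _ _ _ C); pose proof (pK1 _ _ _ C); nra).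
  exists 1. split. left; reflexivity.
  intros r s t Xr' Xs' Xt' Hr H1 H2 H3.
  rewrite (uniq_C3 _ _ _ _ H1 (PhiN_der_r b1 b2 b3 r s t)).
  rewrite (uniq_C3 _ _ _ _ H2 (PhiN_der_s b1 b2 b3 r s t)).
  rewrite (uniq_C3 _ _ _ _ H3 (PhiN_der_t b1 b2 b3 r s t Hk)).
  rewrite cos_PI2, sin_PI2, gram_val, Im_val; auto.
  destruct (idents_ok b1 b2 b3 t C) as [HS H0 H3' H4 HB Hx].
  rewrite sqrt_mult_alt by lra. rewrite sqrt_pow2.
  ring. apply Rmult_le_pos. apply pow2_ge_0. lra.
Qed.

Lemma link_eq b1 b2 b3 s t : Consts b1 b2 b3 ->
  link_chart (PhiN b1 b2 b3) s t = PhiN b1 b2 b3 (/ sqrt 3) s t.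
Proof.
  intros C. unfold link_chart, norm3. rewrite g3_PhiN; auto.
  rewrite cscal_PhiN. f_equal. rewrite pow1, Rmult_1_l. ring.
Qed.

Lemma S5_PhiN b1 b2 b3 s t : Consts b1 b2 b3 -> S5 (PhiN b1 b2 b3 (/ sqrt 3) s t).
Proof.
  intros C. unfold S5, norm3. rewrite g3_PhiN; auto.
  pose proof (sqrt_lt_R0 3 ltac:(lra)). pose proof (sqrt_sqrt 3 ltac:(lra)).
  replace ((/ sqrt 3) ^ 2 * 3) with 1. apply sqrt_1.
  field_simplify. 2: lra. rewrite pow2_sqrt; [field|]; lra.
Qed.

Lemma phase_lemma A A' th th' : A * cos th = A' * cos th' -> A * sin th = A' * sin th' ->
  exists e, (e = 1 \/ e = -1) /\ A' = e * A /\ (A <> 0 -> cos (th' - th) = e /\ sin (th' - th) = 0).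
Proof.
  intros H1 H2.
  pose proof (sin2_cos2 th) as P. pose proof (sin2_cos2 th') as P'. unfold Rsqr in P, P'.
  assert (HA : A * A = A' * A').
  { transitivity ((A * cos th) * (A * cos th) + (A * sin th) * (A * sin th)).
    transitivity (A * A * (sin th * sin th + cos th * cos th)). rewrite P; ring. ring.
    rewrite H1, H2. transitivity (A' * A' * (sin th' * sin th' + cos th' * cos th')). ring. rewrite P'; ring. }
  assert (HA' : (A' - A) * (A' + A) = 0) by (ring_simplify; lra).
  destruct (Rmult_integral _ _ HA') as [Hm | Hm].
  - exists 1. split. left; reflexivity. split. lra.
    intros Hn. assert (A' = A) by lra. subst A'.
    assert (cos th = cos th') by (apply (Rmult_eq_reg_l A); auto).
    assert (sin th = sin th') by (apply (Rmult_eq_reg_l A); auto).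
    rewrite cos_minus, sin_minus. rewrite <- H, <- H0. split. lra. ring.
  - exists (-1). split. right; reflexivity. split. lra.
    intros Hn. assert (A' = - A) by lra. subst A'.
    assert (cos th = - cos th') by (apply (Rmult_eq_reg_l A); auto; lra).
    assert (sin th = - sin th') by (apply (Rmult_eq_reg_l A); auto; lra).
    rewrite cos_minus, sin_minus. rewrite H, H0. split. lra. ring.
Qed.

Lemma core_fwd b1 b2 b3 r s t r' s' t' : Consts b1 b2 b3 -> 0 < r -> 0 < r' ->
  PhiN b1 b2 b3 r s t = PhiN b1 b2 b3 r' s' t' ->
  r = r' /\ exists e : R, (e = 1 \/ e = -1) /\
    cn_ b1 b2 b3 t' = e * cn_ b1 b2 b3 t /\ sn_ b1 b2 b3 t' = e * sn_ b1 b2 b3 t /\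
    cos (IZR b1 * (s' - s)) = 1 /\ sin (IZR b1 * (s' - s)) = 0 /\
    cos (IZR b2 * (s' - s)) = e /\ sin (IZR b2 * (s' - s)) = 0.
Proof.
  intros C Hr Hr' E.
  assert (Err : r = r').
  { pose proof (f_equal (fun p => g3 p p) E) as G. cbv beta in G. rewrite !g3_PhiN in G; auto. nra. }
  subst r'. split; [reflexivity|].
  pose proof (cB1 _ _ _ C) as EB. pose proof (cB _ _ _ C) as HB.
  pose proof (pC1 _ _ _ C). pose proof (pC2 _ _ _ C). pose proof (pC3 _ _ _ C). pose proof (pK _ _ _ C). pose proof (pK1 _ _ _ C).
  assert (Hk : bb b1 b2 b3 ^ 2 < 1) by nra.
  rewrite !PhiN_expl in E. unfold cpol in E.
  injection E as E1c E1s E2c E2s E3c E3s.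
  destruct (phase_lemma _ _ _ _ E1c E1s) as [e1 [He1 [A1 T1]]].
  destruct (phase_lemma _ _ _ _ E2c E2s) as [e2 [He2 [A2 T2]]].
  destruct (phase_lemma _ _ _ _ E3c E3s) as [e3 [He3 [A3 T3]]].
  pose proof (ix1 _ _ _ _ (idents_ok b1 b2 b3 t C)) as X1.
  pose proof (ix1 _ _ _ _ (idents_ok b1 b2 b3 t' C)) as X1'.
  assert (He1' : e1 = 1).
  { destruct He1; auto. subst e1. nra. }
  subst e1.
  assert (Hx1 : x1 b1 b2 b3 t' = x1 b1 b2 b3 t) by (apply (Rmult_eq_reg_l r); lra).
  destruct (T1 ltac:(nra)) as [D1c D1s].
  replace (IZR b1 * s' - IZR b1 * s) with (IZR b1 * (s' - s)) in D1c, D1s by ring.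
  assert (Hcn : cn_ b1 b2 b3 t' = e2 * cn_ b1 b2 b3 t).
  { unfold x2 in A2. apply (Rmult_eq_reg_l (r * cc2 b1 b2 b3)). lra. nra. }
  assert (Hsn : sn_ b1 b2 b3 t' = e3 * sn_ b1 b2 b3 t).
  { unfold x3 in A3. apply (Rmult_eq_reg_l (r * cc3 b1 b2 b3)). lra. nra. }
  replace (IZR b2 * s' - IZR b2 * s) with (IZR b2 * (s' - s)) in T2 by ring.
  replace (IZR b3 * s' - IZR b3 * s) with (- (IZR b1 * (s' - s) + IZR b2 * (s' - s))) in T3 by (rewrite EB; ring).
  rewrite cos_neg, sin_neg, cos_plus, sin_plus, D1c, D1s in T3.
  assert (SC : sn_ b1 b2 b3 t ^ 2 + cn_ b1 b2 b3 t ^ 2 = 1) by apply jsn_jcn.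
  destruct (Req_dec (cn_ b1 b2 b3 t) 0) as [Hc0 | Hc0].
  -
    assert (Hs0 : sn_ b1 b2 b3 t <> 0) by (intro; nra).
    destruct (T3 ltac:(unfold x3; intro; apply Hs0; apply (Rmult_eq_reg_l (r * cc3 b1 b2 b3)); nra)) as [T3c T3s].
    exists e3. split; auto. split. rewrite Hcn, Hc0. ring. split; auto. split; auto. split; auto.
    assert (sin (IZR b2 * (s' - s)) = 0) by nra.
    split; nra.
  - destruct (T2 ltac:(unfold x2; intro; apply Hc0; apply (Rmult_eq_reg_l (r * cc2 b1 b2 b3)); nra)) as [T2c T2s].
    destruct (Req_dec (sn_ b1 b2 b3 t) 0) as [Hs0 | Hs0].
    + exists e2. split; auto. split; auto. split. rewrite Hsn, Hs0. ring. repeat split; auto.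
    + destruct (T3 ltac:(unfold x3; intro; apply Hs0; apply (Rmult_eq_reg_l (r * cc3 b1 b2 b3)); nra)) as [T3c T3s].
      rewrite T2c, T2s in T3c.
      assert (Hee : e3 = e2) by lra.
      exists e2. repeat split; auto. rewrite Hsn, Hee. reflexivity.
Qed.

Lemma sgn_even n : sgn n = 1 -> Z.even n = true.
Proof. unfold sgn. destruct (Z.even n); auto. lra. Qed.
Lemma sgn_eq_even n m : sgn n = sgn m -> Z.even n = Z.even m.
Proof. unfold sgn. destruct (Z.even n), (Z.even m); auto; lra. Qed.

Lemma core_int b1 b2 b3 r s t r' s' t' : Consts b1 b2 b3 -> 0 < r -> 0 < r' ->
  PhiN b1 b2 b3 r s t = PhiN b1 b2 b3 r' s' t' ->
  r = r' /\ exists n k1 k2 : Z,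
    t' - t = IZR n * (ellF (bb b1 b2 b3) PI / aa b1 b2 b3) /\
    IZR b1 * (s' - s) = IZR k1 * PI /\ IZR b2 * (s' - s) = IZR k2 * PI /\
    Z.even k1 = true /\ Z.even k2 = Z.even n.
Proof.
  intros C Hr Hr' E.
  destruct (core_fwd _ _ _ _ _ _ _ _ _ C Hr Hr' E) as [Err [e [He [Hcn [Hsn [D1c [D1s [D2c D2s]]]]]]]].
  split; auto.
  pose proof (pK _ _ _ C). pose proof (pK1 _ _ _ C). pose proof (pA _ _ _ C).
  assert (Hk : bb b1 b2 b3 ^ 2 < 1) by nra.
  set (K := bb b1 b2 b3) in *. set (A := aa b1 b2 b3) in *.
  set (phi := jam (A * t) K). set (phi' := jam (A * t') K).
  assert (Sc : sin phi * sin phi + cos phi * cos phi = 1) by (pose proof (sin2_cos2 phi); unfold Rsqr in H2; lra).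
  unfold cn_, sn_, jcn, jsn in Hcn, Hsn. fold K A in Hcn, Hsn. fold phi phi' in Hcn, Hsn.
  assert (S0 : sin (phi' - phi) = 0) by (rewrite sin_minus, Hcn, Hsn; ring).
  destruct (sin_eq_0_0 _ S0) as [n Hn].
  assert (C0 : cos (phi' - phi) = e).
  { rewrite cos_minus, Hcn, Hsn. transitivity (e * (sin phi * sin phi + cos phi * cos phi)). ring. rewrite Sc; ring. }
  rewrite Hn in C0. destruct (cos_sin_kPI n) as [Cn _]. rewrite Cn in C0.
  destruct (sin_eq_0_0 _ D1s) as [k1 Hk1]. destruct (sin_eq_0_0 _ D2s) as [k2 Hk2].
  exists n, k1, k2. split; [|split; [|split; [|split]]]; auto.
  - assert (At : A * t' = A * t + IZR n * ellF K PI).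
    { rewrite <- (jam_spec K (A * t')), <- (jam_spec K (A * t)); auto. fold phi phi'.
      replace phi' with (phi + IZR n * PI) by lra. apply ellF_shift_k; auto. }
    apply (Rmult_eq_reg_l A). 2: lra. field_simplify; [|lra]. lra.
  - apply sgn_even. rewrite Hk1 in D1c. destruct (cos_sin_kPI k1) as [Ck _]. lra.
  - apply sgn_eq_even. rewrite Hk2 in D2c. destruct (cos_sin_kPI k2) as [Ck _]. lra.
Qed.

Lemma cpol_flip e A th th' : e * e = 1 -> cos th' = e * cos th -> sin th' = e * sin th ->
  cpol (e * A) th' = cpol A th.
Proof.
  intros He Hc Hs. unfold cpol. rewrite Hc, Hs. f_equal.
  transitivity (e * e * (A * cos th)); [ring | rewrite He; ring].
  transitivity (e * e * (A * sin th)); [ring | rewrite He; ring].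
Qed.

Lemma core_bwd b1 b2 b3 r s t s' t' (g be1 be2 n y : Z) : Consts b1 b2 b3 ->
  b1 = (be1 * g)%Z -> b2 = (be2 * g)%Z -> IZR g <> 0 ->
  t' - t = IZR n * (ellF (bb b1 b2 b3) PI / aa b1 b2 b3) ->
  s' - s = IZR y * PI / IZR g ->
  Z.even (be1 * y) = true -> Z.even (be2 * y) = Z.even n ->
  PhiN b1 b2 b3 r s t = PhiN b1 b2 b3 r s' t'.
Proof.
  intros C Hb1 Hb2 Hg Ht Hs Ev1 Ev2.
  pose proof (pK _ _ _ C). pose proof (pK1 _ _ _ C). pose proof (pA _ _ _ C).
  pose proof (cB1 _ _ _ C) as EB.
  assert (Hk : bb b1 b2 b3 ^ 2 < 1) by nra.
  set (K := bb b1 b2 b3) in *. set (A := aa b1 b2 b3) in *.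
  assert (At : A * t' = A * t + IZR n * ellF K PI).
  { replace t' with (t + IZR n * (ellF K PI / A)) by lra. field. lra. }
  assert (Jt : jam (A * t') K = jam (A * t) K + IZR n * PI) by (rewrite At; apply jam_shift_k; auto).
  assert (Hsn : sn_ b1 b2 b3 t' = sgn n * sn_ b1 b2 b3 t).
  { unfold sn_, jsn. fold K A. rewrite Jt. apply sin_shift_k. }
  assert (Hcn : cn_ b1 b2 b3 t' = sgn n * cn_ b1 b2 b3 t).
  { unfold cn_, jcn. fold K A. rewrite Jt. apply cos_shift_k. }
  assert (Hdn : dn_ b1 b2 b3 t' = dn_ b1 b2 b3 t).
  { unfold dn_, jdn. change (jsn (aa b1 b2 b3 * t') (bb b1 b2 b3)) with (sn_ b1 b2 b3 t').
    change (jsn (aa b1 b2 b3 * t) (bb b1 b2 b3)) with (sn_ b1 b2 b3 t).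
    rewrite Hsn. f_equal. transitivity (1 - bb b1 b2 b3^2 * (sgn n * sgn n) * sn_ b1 b2 b3 t ^ 2). ring. rewrite sgn_sq. ring. }
  assert (S1 : IZR b1 * s' = IZR b1 * s + IZR (be1 * y) * PI).
  { replace s' with (s + IZR y * PI / IZR g) by lra. rewrite Hb1, !mult_IZR. field. auto. }
  assert (S2 : IZR b2 * s' = IZR b2 * s + IZR (be2 * y) * PI).
  { replace s' with (s + IZR y * PI / IZR g) by lra. rewrite Hb2, !mult_IZR. field. auto. }
  assert (S3 : IZR b3 * s' = IZR b3 * s + IZR (- (be1 * y + be2 * y)) * PI).
  { assert (IZR b3 = - IZR b1 - IZR b2) by lra. rewrite H2, opp_IZR, plus_IZR.
    replace ((- IZR b1 - IZR b2) * s') with (- (IZR b1 * s') - IZR b2 * s') by ring.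
    rewrite S1, S2. ring. }
  assert (G1 : sgn (be1 * y) = 1) by (unfold sgn; rewrite Ev1; reflexivity).
  assert (G2 : sgn (be2 * y) = sgn n) by (unfold sgn; rewrite Ev2; reflexivity).
  assert (G3 : sgn (- (be1 * y + be2 * y)) = sgn n) by (rewrite sgn_opp, sgn_add, G1, G2; ring).
  rewrite !PhiN_expl.
  rewrite S1, S2, S3.
  assert (X1 : r * x1 b1 b2 b3 t' = 1 * (r * x1 b1 b2 b3 t)) by (unfold x1; rewrite Hdn; ring).
  assert (X2 : r * x2 b1 b2 b3 t' = sgn n * (r * x2 b1 b2 b3 t)) by (unfold x2; rewrite Hcn; ring).
  assert (X3 : r * x3 b1 b2 b3 t' = sgn n * (r * x3 b1 b2 b3 t)) by (unfold x3; rewrite Hsn; ring).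
  rewrite X1, X2, X3.
  rewrite (cpol_flip 1 (r * x1 b1 b2 b3 t) (IZR b1 * s)), (cpol_flip (sgn n) (r * x2 b1 b2 b3 t) (IZR b2 * s)),
    (cpol_flip (sgn n) (r * x3 b1 b2 b3 t) (IZR b3 * s)); try reflexivity; try apply sgn_sq; try ring;
    rewrite ?cos_shift_k, ?sin_shift_k, ?G1, ?G2, ?G3; reflexivity.
Qed.

Lemma core_fwd2 b1 b2 b3 r s t r' s' t' (g be1 be2 u v : Z) : Consts b1 b2 b3 ->
  b1 = (be1 * g)%Z -> b2 = (be2 * g)%Z -> (u * b1 + v * b2)%Z = g -> 0 < IZR g ->
  0 < r -> 0 < r' -> PhiN b1 b2 b3 r s t = PhiN b1 b2 b3 r' s' t' ->
  r = r' /\ exists n y : Z,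
    t' - t = IZR n * (ellF (bb b1 b2 b3) PI / aa b1 b2 b3) /\
    s' - s = IZR y * PI / IZR g /\ Z.even (be1 * y) = true /\ Z.even (be2 * y) = Z.even n.
Proof.
  intros C Hb1 Hb2 Huv Hg Hr Hr' E.
  destruct (core_int _ _ _ _ _ _ _ _ _ C Hr Hr' E) as [Err [n [k1 [k2 [Ht [Hk1 [Hk2 [Ev1 Ev2]]]]]]]].
  split; auto.
  set (y := (u * k1 + v * k2)%Z).
  pose proof PI_RGT_0 as HPI.
  assert (Hd : s' - s = IZR y * PI / IZR g).
  { apply (Rmult_eq_reg_l (IZR g)); [|lra].
    transitivity (IZR u * (IZR b1 * (s' - s)) + IZR v * (IZR b2 * (s' - s))).
    rewrite <- Huv, plus_IZR, !mult_IZR. ring.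
    rewrite Hk1, Hk2. unfold y. rewrite plus_IZR, !mult_IZR. field. lra. }
  assert (K1 : k1 = (be1 * y)%Z).
  { apply eq_IZR. apply (Rmult_eq_reg_r PI); [|lra]. rewrite <- Hk1, Hd, Hb1, !mult_IZR. field. lra. }
  assert (K2 : k2 = (be2 * y)%Z).
  { apply eq_IZR. apply (Rmult_eq_reg_r PI); [|lra]. rewrite <- Hk2, Hd, Hb2, !mult_IZR. field. lra. }
  exists n, y. rewrite K1 in Ev1. rewrite K2 in Ev2. repeat split; auto.
Qed.

Lemma even_half x : Z.even x = true -> exists m, x = (2 * m)%Z.
Proof. intros H. apply Z.even_spec in H. exact H. Qed.

Lemma T2_ok b1 b2 b3 : Consts b1 b2 b3 -> cone_on_T2_param (PhiN b1 b2 b3).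
Proof.
  intros C.
  pose proof (cB1 _ _ _ C) as EB. pose proof (cB _ _ _ C) as HB.
  pose proof (pK _ _ _ C). pose proof (pK1 _ _ _ C). pose proof (pA _ _ _ C).
  assert (Hk : bb b1 b2 b3 ^ 2 < 1) by nra.
  assert (Hb1n : (b1 < 0)%Z) by (apply lt_IZR; lra).
  set (g := Z.gcd b1 b2).
  assert (Hg : (0 < g)%Z).
  { pose proof (Z.gcd_nonneg b1 b2). assert (g <> 0%Z). intro Hz. apply Z.gcd_eq_0_l in Hz. lia. unfold g in *; lia. }
  destruct (Z.gcd_divide_l b1 b2) as [be1 Hbe1]. fold g in Hbe1.
  destruct (Z.gcd_divide_r b1 b2) as [be2 Hbe2]. fold g in Hbe2.
  destruct (Z.gcd_bezout b1 b2 g eq_refl) as [u [v Huv]].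
  set (T := ellF (bb b1 b2 b3) PI / aa b1 b2 b3).
  pose proof PI_RGT_0 as HPI.
  assert (HT : 0 < T).
  { unfold T. pose proof (ellF_mono (bb b1 b2 b3) 0 PI Hk ltac:(lra)). rewrite ellF_0 in H2.
    apply Rdiv_lt_0_compat; lra. }
  set (G := IZR g). assert (HG : 0 < G) by (apply IZR_lt; auto).
  case_eq (Z.even be1); intros Hev1.
  -
    assert (Hev2 : Z.even be2 = false).
    { case_eq (Z.even be2); intros H2; auto. exfalso.
      destruct (even_half _ Hev1) as [c1 Hc1]. destruct (even_half _ H2) as [c2 Hc2].
      assert (D : (2 * g | g)%Z).
      { unfold g at 2. apply Z.gcd_greatest. exists c1. rewrite Hbe1, Hc1. ring. exists c2. rewrite Hbe2, Hc2. ring. }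
      apply Z.divide_pos_le in D; auto. lia. }
    exists (2 * PI / G), 0, (PI / G), T. split.
    { replace (2 * PI / G * T - 0 * (PI / G)) with (2 * PI * T / G) by (field; lra).
      apply Rgt_not_eq. apply Rdiv_lt_0_compat; nra. }
    intros r s t r' s' t' Hr Hr'. split.
    + intros E. destruct (core_fwd2 _ _ _ _ _ _ _ _ _ g be1 be2 u v C Hbe1 Hbe2 Huv HG Hr Hr' E)
        as [Err [n [y [Ht [Hs [E1 E2]]]]]].
      split; auto.
      assert (Ey : Z.even (y - n) = true).
      { rewrite Z.even_sub. rewrite Z.even_mul, Hev2 in E2. simpl in E2. rewrite E2. destruct (Z.even n); reflexivity. }
      destruct (even_half _ Ey) as [m Hm].
      exists m, n. split.
      * rewrite Hs. replace y with (2 * m + n)%Z by lia. rewrite plus_IZR, mult_IZR. fold G. field. lra.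
      * rewrite Ht. fold T. ring.
    + intros [Err [m [n [Hs Ht]]]]. subst r'.
      apply (core_bwd b1 b2 b3 r s t s' t' g be1 be2 n (2 * m + n)); auto.
      * apply Rgt_not_eq. fold G; lra.
      * rewrite Ht. fold T. ring.
      * rewrite Hs. rewrite plus_IZR, mult_IZR. fold G. field. lra.
      * rewrite Z.even_mul, Hev1. reflexivity.
      * rewrite Z.even_mul, Hev2, Z.even_add, (Z.even_mul 2 m). simpl. destruct (Z.even n); reflexivity.
  -
    exists (2 * PI / G), 0, 0, (2 * T). split.
    { replace (2 * PI / G * (2 * T) - 0 * 0) with (4 * PI * T / G) by (field; lra).
      apply Rgt_not_eq. apply Rdiv_lt_0_compat; nra. }
    intros r s t r' s' t' Hr Hr'. split.
    + intros E. destruct (core_fwd2 _ _ _ _ _ _ _ _ _ g be1 be2 u v C Hbe1 Hbe2 Huv HG Hr Hr' E)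
        as [Err [n [y [Ht [Hs [E1 E2]]]]]].
      split; auto.
      assert (Ey : Z.even y = true) by (rewrite Z.even_mul, Hev1 in E1; exact E1).
      assert (En : Z.even n = true) by (rewrite <- E2, Z.even_mul, Ey; destruct (Z.even be2); reflexivity).
      destruct (even_half _ Ey) as [m Hm]. destruct (even_half _ En) as [n' Hn'].
      exists m, n'. split.
      * rewrite Hs, Hm, mult_IZR. fold G. field. lra.
      * rewrite Ht, Hn', mult_IZR. fold T. ring.
    + intros [Err [m [n [Hs Ht]]]]. subst r'.
      apply (core_bwd b1 b2 b3 r s t s' t' g be1 be2 (2 * n) (2 * m)); auto.
      * apply Rgt_not_eq. fold G; lra.
      * rewrite Ht, mult_IZR. fold T. ring.
      * rewrite Hs, mult_IZR. fold G. field. lra.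
      * rewrite Z.even_mul, (Z.even_mul 2 m). simpl. destruct (Z.even be1); reflexivity.
      * rewrite !Z.even_mul. simpl. destruct (Z.even be2); reflexivity.
Qed.

Theorem theorem8p7 (b1 b2 b3 : Z) :
  (b2 > b3)%Z -> (b3 > 0)%Z -> (0 > b1)%Z -> (b1 + b2 + b3 = 0)%Z ->
  (* a > 0, b in (0,1), with the defining squares *)
  (0 < aa b1 b2 b3 /\ 0 < bb b1 b2 b3 < 1 /\
   aa b1 b2 b3 ^ 2 = a2 b1 b2 b3 * (a1 b1 b2 b3 - a3 b1 b2 b3) /\
   bb b1 b2 b3 ^ 2 = a1 b1 b2 b3 * (a2 b1 b2 b3 - a3 b1 b2 b3)
                     / (a2 b1 b2 b3 * (a1 b1 b2 b3 - a3 b1 b2 b3))) /\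
  (* N is a special Lagrangian cone on T^2 with phase i *)
  is_cone (Nset b1 b2 b3) /\
  cone_on_T2_param (PhiN b1 b2 b3) /\
  C1_immersion (PhiN b1 b2 b3) /\
  calibrated_SL (PI / 2) (PhiN b1 b2 b3) /\
  (* (s,t) are conformal coordinates on N cap S^5 *)
  (forall s t, S5 (link_chart (PhiN b1 b2 b3) s t) /\
               Nset b1 b2 b3 (link_chart (PhiN b1 b2 b3) s t)) /\
  (forall p, Nset b1 b2 b3 p -> S5 p ->
     exists s t, p = link_chart (PhiN b1 b2 b3) s t) /\
  conformal_coords (link_chart (PhiN b1 b2 b3)).
Proof.
  intros h1 h2 h3 h4.
  pose proof (consts_ok b1 b2 b3 h1 h2 h3 h4) as C.
  assert (Hk : bb b1 b2 b3 ^ 2 < 1) by (pose proof (pK _ _ _ C); pose proof (pK1 _ _ _ C); nra).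
  pose proof (sqrt_lt_R0 3 ltac:(lra)) as Hs3.
  assert (Hi3 : 0 < / sqrt 3) by (apply Rinv_0_lt_compat; auto).
  split. { split. apply (pA _ _ _ C). split. split. apply (pK _ _ _ C). apply (pK1 _ _ _ C).
           split. apply (dA _ _ _ C). apply (dK _ _ _ C). }
  split. apply is_cone_ok.
  split. apply T2_ok; auto.
  split. apply C1_immersion_ok; auto.
  split. apply calibrated_ok; auto.
  split.
  { intros s t. rewrite link_eq; auto. split. apply S5_PhiN; auto. exists (/ sqrt 3), s, t. split; auto. }
  split.
  { intros p [r [s [t [Hr ->]]]] HS. exists s, t. rewrite link_eq; auto.
    unfold S5, norm3 in HS. rewrite g3_PhiN in HS; auto.
    assert (E : r ^ 2 * 3 = 1). { rewrite <- sqrt_1 in HS. apply sqrt_inj in HS; nra. }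
    f_equal.
    pose proof (sqrt_sqrt 3 ltac:(lra)) as H3.
    apply (Rmult_eq_reg_l (sqrt 3)); [|lra]. rewrite Rinv_r by lra.
    assert ((sqrt 3 * r) ^ 2 = 1) by (replace ((sqrt 3 * r)^2) with (sqrt 3 * sqrt 3 * r^2) by ring; rewrite H3; lra).
    assert (0 < sqrt 3 * r) by (apply Rmult_lt_0_compat; auto). nra. }
  { intros s t. exists (Xs b1 b2 b3 (/ sqrt 3) s t), (Xt b1 b2 b3 (/ sqrt 3) s t).
    pose proof (gvals_ok b1 b2 b3 (/ sqrt 3) s t C) as G.
    destruct (idents_ok b1 b2 b3 t C) as [HS H0 H3 H4 HB Hx].
    split. apply (is_derive_ext (fun x => PhiN b1 b2 b3 (/ sqrt 3) x t)).
    intros; rewrite link_eq; auto. apply PhiN_der_s.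
    split. apply (is_derive_ext (fun x => PhiN b1 b2 b3 (/ sqrt 3) s x)).
    intros; rewrite link_eq; auto. apply PhiN_der_t; auto.
    split. apply (gST _ _ _ _ _ _ G). split. rewrite (gSS _ _ _ _ _ _ G), (gTT _ _ _ _ _ _ G). reflexivity.
    rewrite (gSS _ _ _ _ _ _ G). apply Rmult_lt_0_compat; auto. apply pow_lt; auto. }
Qed.
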